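(* Let $\mathbb{X}=\{1,2,3,\dots\}$, $\alpha>0$, and let $\mu\in\mathcal{P}(\mathbb{X})$ satisfy, for some constants $0<k_0\le k_1$ and some $N>0$, $k_0e^{-\alpha x}\le\mu(\{x\})\le k_1e^{-\alpha x}$ for all $x\ge N$. Let $\epsilon_n=n^{-\tau}$ with $\tau\in(0,1/2)$. Then $$|H(\mu)-H(\hat\mu_{n,\epsilon_n})|=O(n^{-\tau}\log n),\qquad\mathbb{P}_\mu\text{-a.s.}$$
   Context: For a probability $\mu$ on $\mathbb{X}$, $f_\mu(x)=\mu(\{x\})$, $A_\mu=\{x:f_\mu(x)>0\}$, and $H(\mu)=-\sum_{x\in A_\mu}f_\mu(x)\log f_\mu(x)$ ($\log$ to a fixed base $b>1$). Given i.i.d. $X_1,X_2,\dots\sim\mu$ with law $\mathbb{P}_\mu$, $\hat\mu_n(A)=\frac1n\sum_{k=1}^n\mathbb{1}_A(X_k)$ is the empirical measure. For $\epsilon>0$, $\Gamma_\epsilon=\{x\in\mathbb{X}:\hat\mu_n(\{x\})\ge\epsilon\}$ and $\hat\mu_{n,\epsilon}=\hat\mu_n(\cdot\mid\Gamma_\epsilon)$, i.e. $\hat\mu_{n,\epsilon}(A)=\hat\mu_n(A\cap\Gamma_\epsilon)/\hat\mu_n(\Gamma_\epsilon)$ (defined arbitrarily when $\Gamma_\epsilon=\emptyset$). *)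

(* Defs.v *)
From Stdlib Require Import Reals Classical ClassicalEpsilon.
Open Scope R_scope.

Definition logb (b x : R) : R := ln x / ln b.

Fixpoint fsum (n : nat) (u : nat -> R) : R :=
  match n with
  | O => 0
  | S m => fsum m u + u m
  end.

Fixpoint fprod (n : nat) (u : nat -> R) : R :=
  match n with
  | O => 1
  | S m => fprod m u * u m
  end.

(** Value of a series (the limit when it converges; arbitrary otherwise). *)
Definition series_value (u : nat -> R) : R :=
  epsilon (inhabits 0) (fun l => infinite_sum u l).

(** A probability on X = {1,2,3,...}, given by its mass function f(x) = mu({x}),
    encoded on nat with f 0 = 0. *)
Definition is_pmf_pos (f : nat -> R) : Prop :=
  f 0%nat = 0 /\ (forall x, 0 <= f x) /\ infinite_sum f 1.

Definition entropy (b : R) (f : nat -> R) : R :=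
  - series_value (fun x => if Rlt_dec 0 (f x) then f x * logb b (f x) else 0).

Definition is_sigma_algebra {Omega : Type} (F : (Omega -> Prop) -> Prop) : Prop :=
  F (fun _ => True) /\
  (forall E, F E -> F (fun w => ~ E w)) /\
  (forall E : nat -> Omega -> Prop, (forall n, F (E n)) -> F (fun w => exists n, E n w)).

Definition is_prob_space {Omega : Type} (F : (Omega -> Prop) -> Prop)
  (P : (Omega -> Prop) -> R) : Prop :=
  is_sigma_algebra F /\
  (forall E, F E -> 0 <= P E) /\
  P (fun _ => True) = 1 /\
  (forall E : nat -> Omega -> Prop,
     (forall n, F (E n)) ->
     (forall n m w, n <> m -> E n w -> E m w -> False) ->
     infinite_sum (fun n => P (E n)) (P (fun w => exists n, E n w))).

(** X_1, X_2, ... (indexed here from 0) are i.i.d. with law f: each {X_k = x}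
    is an event, and for every n the joint law of (X_0,...,X_{n-1}) is the
    product law. *)
Definition iid_with_law {Omega : Type} (F : (Omega -> Prop) -> Prop)
  (P : (Omega -> Prop) -> R) (X : nat -> Omega -> nat) (f : nat -> R) : Prop :=
  (forall k x, F (fun w => X k w = x)) /\
  (forall (n : nat) (xs : nat -> nat),
     P (fun w => forall k, (k < n)%nat -> X k w = xs k) =
     fprod n (fun k => f (xs k))).

Definition indic {T : Type} (A : T -> Prop) (y : T) : R :=
  if excluded_middle_informative (A y) then 1 else 0.

Definition emp {Omega : Type} (X : nat -> Omega -> nat) (n : nat) (w : Omega)
  (A : nat -> Prop) : R :=
  / INR n * fsum n (fun k => indic A (X k w)).

Definition Gamma {Omega : Type} (X : nat -> Omega -> nat) (n : nat) (w : Omega)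
  (eps : R) (x : nat) : Prop :=
  emp X n w (fun y => y = x) >= eps.

(** Mass function of hat mu_{n,eps} = hat mu_n( . | Gamma_eps). *)
Definition emp_cond_pmf {Omega : Type} (X : nat -> Omega -> nat) (n : nat)
  (w : Omega) (eps : R) (x : nat) : R :=
  emp X n w (fun y => y = x /\ Gamma X n w eps y) / emp X n w (Gamma X n w eps).

(* Main.v *)
Require Import Defs.
From Stdlib Require Import Reals Classical ClassicalEpsilon.
From Stdlib Require Import Lra Lia Arith Compare_dec ZArith FunctionalExtensionality PropExtensionality.
Open Scope R_scope.


Lemma exp_le_mono x y : x <= y -> exp x <= exp y.
Proof. intros [H|H]; [left; apply exp_increasing; auto | subst; lra]. Qed.

Lemma ln_le_mono x y : 0 < x -> x <= y -> ln x <= ln y.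
Proof. intros Hx [H|H]; [left; apply ln_increasing; auto | subst; lra]. Qed.

Lemma ln_le_sub1 x : 0 < x -> ln x <= x - 1.
Proof. intros Hx. pose proof (exp_ineq1_le (ln x)). rewrite exp_ln in H; lra. Qed.

Lemma exp_pos' x : 0 < exp x. Proof. apply exp_pos. Qed.

Lemma fsum_ext n u v : (forall k, (k < n)%nat -> u k = v k) -> fsum n u = fsum n v.
Proof. induction n; simpl; intros H; auto. rewrite IHn, H; auto; intros; apply H; lia. Qed.

Lemma fsum_plus n u v : fsum n (fun k => u k + v k) = fsum n u + fsum n v.
Proof. induction n; simpl; [lra|rewrite IHn; lra]. Qed.

Lemma fsum_minus n u v : fsum n (fun k => u k - v k) = fsum n u - fsum n v.
Proof. induction n; simpl; [lra|rewrite IHn; lra]. Qed.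

Lemma fsum_scal n c u : fsum n (fun k => c * u k) = c * fsum n u.
Proof. induction n; simpl; [lra|rewrite IHn; lra]. Qed.

Lemma fsum_le n u v : (forall k, (k < n)%nat -> u k <= v k) -> fsum n u <= fsum n v.
Proof. induction n; simpl; intros H; [lra|]. pose proof (H n ltac:(lia)).
 assert (fsum n u <= fsum n v) by (apply IHn; intros; apply H; lia). lra. Qed.

Lemma fsum_nonneg n u : (forall k, (k < n)%nat -> 0 <= u k) -> 0 <= fsum n u.
Proof. intros H. replace 0 with (fsum n (fun _ => 0)). apply fsum_le; auto.
 induction n; simpl; auto. rewrite IHn; [lra|intros; apply H; lia]. Qed.

Lemma fsum_const n c : fsum n (fun _ => c) = INR n * c.
Proof. induction n; simpl fsum; [simpl; lra|rewrite IHn, S_INR; lra]. Qed.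

Lemma fsum_abs n u : Rabs (fsum n u) <= fsum n (fun k => Rabs (u k)).
Proof. induction n; simpl; [rewrite Rabs_R0; lra|].
 eapply Rle_trans; [apply Rabs_triang|]. lra. Qed.

Lemma fsum_front n u : fsum (S n) u = u O + fsum n (fun k => u (S k)).
Proof. induction n; simpl in *; [lra|]. rewrite IHn. lra. Qed.

Lemma fsum_mono_n m n u : (m <= n)%nat -> (forall k, 0 <= u k) -> fsum m u <= fsum n u.
Proof. intros H Hu; induction H; [lra|simpl; pose proof (Hu m0); lra]. Qed.

Lemma fsum_swap n m (g : nat -> nat -> R) :
  fsum n (fun i => fsum m (fun j => g i j)) = fsum m (fun j => fsum n (fun i => g i j)).
Proof. induction n; simpl. - induction m; simpl; [lra| rewrite <- IHm; lra].
 - rewrite IHn, <- fsum_plus. reflexivity. Qed.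

Lemma fsum_split m k u : fsum (m + k) u = fsum m u + fsum k (fun j => u (m + j)%nat).
Proof. induction k; simpl. - rewrite Nat.add_0_r; lra.
 - rewrite Nat.add_succ_r; simpl; rewrite IHk; lra. Qed.

Definition cvs (u : nat -> R) (l : R) := Un_cv (fun K => fsum K u) l.

Lemma fsum_sumf u N : fsum (S N) u = sum_f_R0 u N.
Proof. induction N; simpl in *; [lra|rewrite IHN; lra]. Qed.

Lemma infinite_sum_cvs u l : infinite_sum u l <-> cvs u l.
Proof. unfold infinite_sum, cvs, Un_cv, Rdist; split; intros H e He; destruct (H e He) as [N HN].
 - exists (S N); intros n Hn. destruct n; [lia|]. rewrite fsum_sumf. apply HN; lia.
 - exists N; intros n Hn. rewrite <- fsum_sumf. apply HN; lia. Qed.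

Lemma series_value_cvs u l : cvs u l -> series_value u = l.
Proof. intros H. apply infinite_sum_cvs in H. unfold series_value.
 eapply uniqueness_sum; [apply epsilon_spec; exists l; exact H| exact H]. Qed.

Lemma cvs_unique u l m : cvs u l -> cvs u m -> l = m.
Proof. intros. eapply UL_sequence; eauto. Qed.

Lemma cvs_le u v l m : cvs u l -> cvs v m -> (forall k, u k <= v k) -> l <= m.
Proof. intros Hu Hv H. eapply Rle_cv_lim; [|exact Hu|exact Hv].
 intros; simpl; apply fsum_le; auto. Qed.

Lemma cvs_le_bound u l B : cvs u l -> (forall K, fsum K u <= B) -> l <= B.
Proof. intros Hu H. eapply Rle_cv_lim; [|exact Hu|]. 2:{ intros e He; exists O; intros; unfold Rdist; rewrite Rminus_diag, Rabs_R0; lra. } intros; simpl; auto. Qed.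

Lemma cvs_scal u l c : cvs u l -> cvs (fun k => c * u k) (c * l).
Proof. intros H. unfold cvs. eapply Un_cv_ext.
 2:{ apply (CV_mult (fun _ => c) (fun K => fsum K u)); [|exact H].
     intros e He; exists O; intros; unfold Rdist; rewrite Rminus_diag, Rabs_R0; lra. }
 intros; simpl; rewrite fsum_scal; auto. Qed.

Lemma cvs_plus u v l m : cvs u l -> cvs v m -> cvs (fun k => u k + v k) (l + m).
Proof. intros Hu Hv. unfold cvs. eapply Un_cv_ext. 2: apply (CV_plus _ _ _ _ Hu Hv).
 intros; simpl; rewrite fsum_plus; auto. Qed.

Lemma cvs_minus u v l m : cvs u l -> cvs v m -> cvs (fun k => u k - v k) (l - m).
Proof. intros Hu Hv. unfold cvs. eapply Un_cv_ext. 2: apply (CV_minus _ _ _ _ Hu Hv).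
 intros; simpl; rewrite fsum_minus; auto. Qed.

Lemma cvs_ext u v l : (forall k, u k = v k) -> cvs u l -> cvs v l.
Proof. intros H Hu. unfold cvs. eapply Un_cv_ext; [|exact Hu]. intros; apply fsum_ext; auto. Qed.

Lemma cv_const c : Un_cv (fun _ => c) c.
Proof. intros e He; exists O; intros; unfold Rdist; rewrite Rminus_diag, Rabs_R0; lra. Qed.

Lemma cvs_fsum_le u l K : (forall k, 0 <= u k) -> cvs u l -> fsum K u <= l.
Proof. intros Hu H. destruct (Rle_or_lt (fsum K u) l) as [|Hlt]; auto.
 destruct (H (fsum K u - l) ltac:(lra)) as [N HN].
 specialize (HN (max N K) ltac:(lia)). unfold Rdist in HN.
 pose proof (fsum_mono_n K (max N K) u ltac:(lia) Hu). apply Rabs_def2 in HN. lra. Qed.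

Lemma cvs_nonneg_bounded u B : (forall k, 0 <= u k) -> (forall K, fsum K u <= B) ->
  exists l, cvs u l /\ l <= B.
Proof. intros Hu HB. destruct (growing_cv (fun K => fsum K u)) as [l Hl].
 - intros n; simpl; pose proof (Hu n); lra.
 - exists B; intros x [K ->]; auto.
 - exists l; split; auto. eapply cvs_le_bound; eauto. Qed.

Lemma cvs_finite u K0 : (forall k, (K0 <= k)%nat -> u k = 0) -> cvs u (fsum K0 u).
Proof. intros H e He; exists K0; intros n Hn. unfold Rdist.
 replace (fsum n u) with (fsum K0 u). rewrite Rminus_diag, Rabs_R0; lra.
 replace n with (K0 + (n - K0))%nat by lia. rewrite fsum_split.
 rewrite (fsum_ext (n-K0) (fun j => u (K0+j)%nat) (fun _ => 0)), fsum_const; [lra|]. intros; apply H; lia. Qed.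

Lemma Rabs_le_between x a : Rabs x <= a -> - a <= x <= a.
Proof. unfold Rabs; destruct Rcase_abs; intros; lra. Qed.


Lemma ex_least (Q : nat -> Prop) : (exists n, Q n) -> exists n, Q n /\ forall k, (k < n)%nat -> ~ Q k.
Proof. intros [n Hn]. revert Hn. induction n as [n IH] using (well_founded_induction Wf_nat.lt_wf). intros Hn.
 destruct (classic (exists k, (k < n)%nat /\ Q k)) as [[k [Hk1 Hk2]]|Hno].
 - apply (IH k Hk1 Hk2).
 - exists n; split; auto. intros k Hk HQ; apply Hno; eauto. Qed.

Lemma pred_ext {T} (A B : T -> Prop) : (forall w, A w <-> B w) -> A = B.
Proof. intros H; apply functional_extensionality; intros w; apply propositional_extensionality; auto. Qed.

Lemma F_true {Om} (F : (Om -> Prop) -> Prop) P : is_prob_space F P -> F (fun _ => True).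
Proof. intros [[H _] _]; auto. Qed.
Lemma F_compl {Om} (F : (Om -> Prop) -> Prop) P A : is_prob_space F P -> F A -> F (fun w => ~ A w).
Proof. intros [[_ [H _]] _]; auto. Qed.
Lemma F_Union {Om} (F : (Om -> Prop) -> Prop) P (E : nat -> Om -> Prop) : is_prob_space F P ->
  (forall n, F (E n)) -> F (fun w => exists n, E n w).
Proof. intros [[_ [_ H]] _]; auto. Qed.
Lemma F_eq {Om} (F : (Om -> Prop) -> Prop) (A B : Om -> Prop) : (forall w, A w <-> B w) -> F A -> F B.
Proof. intros H; rewrite (pred_ext A B H); auto. Qed.
Lemma P_eq {Om} (P : (Om -> Prop) -> R) (A B : Om -> Prop) : (forall w, A w <-> B w) -> P A = P B.
Proof. intros H; rewrite (pred_ext A B H); auto. Qed.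

Lemma F_false {Om} F P : is_prob_space F P -> F (fun _ : Om => False).
Proof. intros hP. eapply F_eq; [|apply (F_compl F P _ hP (F_true F P hP))]. simpl; tauto. Qed.

Lemma F_or {Om} F P (A B : Om -> Prop) : is_prob_space F P -> F A -> F B -> F (fun w => A w \/ B w).
Proof. intros hP HA HB. eapply F_eq; [|apply (F_Union F P (fun n => match n with O => A | _ => B end) hP)].
 - intros w; split; [intros [n Hn]; destruct n; auto|intros [H|H]; [exists O|exists 1%nat]; auto].
 - intros [|n]; auto. Qed.

Lemma F_and {Om} F P (A B : Om -> Prop) : is_prob_space F P -> F A -> F B -> F (fun w => A w /\ B w).
Proof. intros hP HA HB. eapply F_eq; [|apply (F_compl F P _ hP (F_or F P _ _ hP (F_compl F P _ hP HA) (F_compl F P _ hP HB)))].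
 intros w; split; [intros H; split; apply NNPP; tauto| tauto]. Qed.

Lemma F_Inter {Om} (F : (Om -> Prop) -> Prop) P (E : nat -> Om -> Prop) : is_prob_space F P ->
  (forall n, F (E n)) -> F (fun w => forall n, E n w).
Proof. intros hP H. eapply F_eq; [|apply (F_compl F P _ hP (F_Union F P (fun n w => ~ E n w) hP (fun n => F_compl F P _ hP (H n))))].
 intros w; split; [intros Hw n; apply NNPP; intros Hn; apply Hw; eauto|intros Hw [n Hn]; auto]. Qed.

Lemma F_finter {Om} F P (E : nat -> Om -> Prop) n : is_prob_space F P ->
  (forall k, (k < n)%nat -> F (E k)) -> F (fun w => forall k, (k < n)%nat -> E k w).
Proof. intros hP. induction n; intros H.
 - eapply F_eq; [|apply (F_true F P hP)]. intros; split; auto; intros; lia.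
 - eapply F_eq; [|apply (F_and F P _ _ hP (IHn (fun k Hk => H k ltac:(lia))) (H n ltac:(lia)))].
   intros w; split; [intros [H1 H2] k Hk; destruct (Nat.eq_dec k n); subst; auto; apply H1; lia|intros Hw; split; [intros; apply Hw; lia|apply Hw; lia]]. Qed.

Lemma P_nonneg {Om} F P (A : Om -> Prop) : is_prob_space F P -> F A -> 0 <= P A.
Proof. intros [_ [H _]]; auto. Qed.
Lemma P_true {Om} F P : is_prob_space F P -> P (fun _ : Om => True) = 1.
Proof. intros [_ [_ [H _]]]; auto. Qed.
Lemma P_cadd {Om} F P (E : nat -> Om -> Prop) : is_prob_space F P -> (forall n, F (E n)) ->
  (forall n m w, n <> m -> E n w -> E m w -> False) -> cvs (fun n => P (E n)) (P (fun w => exists n, E n w)).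
Proof. intros [_ [_ [_ H]]] H1 H2. apply infinite_sum_cvs; auto. Qed.

Lemma P_false {Om} F P : is_prob_space F P -> P (fun _ : Om => False) = 0.
Proof. intros hP. pose proof (P_cadd F P (fun _ _ => False) hP (fun _ => F_false F P hP) ltac:(tauto)) as H. cbv beta in H.
 rewrite (P_eq P (fun w => exists n : nat, False) (fun _ => False)) in H by (intros; split; [intros [_ []]|tauto]).
 pose proof (cvs_fsum_le _ _ 2 (fun _ => P_nonneg F P _ hP (F_false F P hP)) H). simpl in H0.
 pose proof (P_nonneg F P _ hP (F_false F P hP)). lra. Qed.

Lemma P_add {Om} F P (A B : Om -> Prop) : is_prob_space F P -> F A -> F B -> (forall w, A w -> B w -> False) ->
  P (fun w => A w \/ B w) = P A + P B.
Proof. intros hP HA HB Hd. set (E := fun n => match n with O => A | 1%nat => B | _ => fun _ => False end).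
 assert (HE : forall n, F (E n)) by (intros [|[|n]]; simpl; auto; apply (F_false F P hP)).
 assert (Hdj : forall n m w, n <> m -> E n w -> E m w -> False).
 { intros [|[|n]] [|[|m]] w Hnm; simpl; try tauto; try lia; eauto. }
 pose proof (P_cadd F P E hP HE Hdj) as H.
 rewrite (P_eq P (fun w => exists n, E n w) (fun w => A w \/ B w)) in H.
 - assert (H2 : cvs (fun n => P (E n)) (fsum 2 (fun n => P (E n)))).
   { apply cvs_finite. intros [|[|k]] Hk; try lia. simpl. apply (P_false F P hP). }
   rewrite (cvs_unique _ _ _ H H2); simpl; lra.
 - intros w; split; [intros [[|[|n]] Hn]; simpl in Hn; tauto|intros [Hw|Hw]; [exists O|exists 1%nat]; auto]. Qed.

Lemma P_mono {Om} F P (A B : Om -> Prop) : is_prob_space F P -> F A -> F B -> (forall w, A w -> B w) -> P A <= P B.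
Proof. intros hP HA HB Hs. rewrite (P_eq P B (fun w => A w \/ (B w /\ ~ A w))).
 - rewrite (P_add F P); auto. pose proof (P_nonneg F P _ hP (F_and F P _ _ hP HB (F_compl F P _ hP HA))). lra.
   apply (F_and F P _ _ hP HB (F_compl F P _ hP HA)). tauto.
 - intros w; split; [intros Hw; destruct (classic (A w)); tauto| intros [H|[H _]]; auto]. Qed.

Lemma P_le1 {Om} F P (A : Om -> Prop) : is_prob_space F P -> F A -> P A <= 1.
Proof. intros hP HA. rewrite <- (P_true F P hP). apply (P_mono F P); auto. apply (F_true F P hP). Qed.

Lemma P_compl {Om} F P (A : Om -> Prop) : is_prob_space F P -> F A -> P (fun w => ~ A w) = 1 - P A.
Proof. intros hP HA. rewrite <- (P_true F P hP). rewrite (P_eq P (fun _ => True) (fun w => A w \/ ~ A w)).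
 rewrite (P_add F P _ _ hP HA (F_compl F P _ hP HA)) by tauto. lra. intros w; tauto. Qed.

Lemma P_union_bound {Om} F P (B : nat -> Om -> Prop) b S : is_prob_space F P -> (forall n, F (B n)) ->
  (forall n, P (B n) <= b n) -> (forall J, fsum J b <= S) -> P (fun w => exists n, B n w) <= S.
Proof. intros hP HB Hb HS. set (D := fun n w => B n w /\ forall k, (k < n)%nat -> ~ B k w).
 assert (HD : forall n, F (D n)).
 { intros n; apply (F_and F P _ _ hP (HB n)). apply (F_finter F P (fun k w => ~ B k w) n hP). intros; apply (F_compl F P _ hP (HB k)). }
 assert (Hdj : forall n m w, n <> m -> D n w -> D m w -> False).
 { intros n m w Hnm [Hn Hn'] [Hm Hm']. destruct (Nat.lt_total n m) as [Hlt|[Heq|Hgt]]; [eapply Hm'; eauto|lia|eapply Hn'; eauto]. }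
 pose proof (P_cadd F P D hP HD Hdj) as H.
 rewrite (P_eq P (fun w => exists n, D n w) (fun w => exists n, B n w)) in H.
 - apply (cvs_le_bound _ _ _ H). intros J. eapply Rle_trans; [|apply (HS J)]. apply fsum_le. intros k _.
   eapply Rle_trans; [|apply Hb]. apply (P_mono F P); auto. intros w [? _]; auto.
 - intros w; split; [intros [n [Hn _]]; eauto|intros Hw; apply ex_least in Hw; destruct Hw as [n Hn]; exists n; exact Hn]. Qed.


Definition consn (x : nat) (ys : nat -> nat) : nat -> nat :=
  fun k => match k with O => x | S k' => ys k' end.

Fixpoint Q (f : nat -> R) (m : nat) (Rp : (nat -> nat) -> Prop) : R :=
  match m with
  | O => indic Rp (fun _ => 0%nat)
  | S m' => series_value (fun x => f x * Q f m' (fun ys => Rp (consn x ys)))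
  end.

Definition win {Om} (X : nat -> Om -> nat) (n m : nat) (w : Om) : nat -> nat :=
  fun k => if Nat.ltb k m then X (n + k)%nat w else 0%nat.

Definition upd (xs : nat -> nat) (n x : nat) : nat -> nat := fun k => if Nat.eqb k n then x else xs k.

Lemma fprod_ext n u v : (forall k, (k < n)%nat -> u k = v k) -> fprod n u = fprod n v.
Proof. induction n; simpl; intros H; auto. rewrite IHn, H; auto; intros; apply H; lia. Qed.

Lemma fprod_nonneg n u : (forall k, 0 <= u k) -> 0 <= fprod n u.
Proof. induction n; simpl; intros H; [lra|]. apply Rmult_le_pos; auto. Qed.

Lemma win_0 {Om} (X : nat -> Om -> nat) n w : win X n 0 w = fun _ => 0%nat.
Proof. apply functional_extensionality; intros k; unfold win; destruct k; reflexivity. Qed.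

Lemma win_S {Om} (X : nat -> Om -> nat) n m w : win X n (S m) w = consn (X n w) (win X (S n) m w).
Proof. apply functional_extensionality; intros [|k]; unfold win, consn.
 - change (Nat.ltb 0 (S m)) with true. cbv iota. rewrite Nat.add_0_r; auto.
 - change (Nat.ltb (S k) (S m)) with (Nat.ltb k m). destruct (Nat.ltb k m); auto. f_equal; lia. Qed.

Definition Qrep_stmt {Om} (F : (Om -> Prop) -> Prop) (P : (Om -> Prop) -> R) (X : nat -> Om -> nat) f m :=
  forall n xs Rp,
  F (fun w => (forall k, (k < n)%nat -> X k w = xs k) /\ Rp (win X n m w)) /\
  P (fun w => (forall k, (k < n)%nat -> X k w = xs k) /\ Rp (win X n m w)) =
     fprod n (fun k => f (xs k)) * Q f m Rp.

Lemma Qrep_0 {Om} F P (X : nat -> Om -> nat) f : is_prob_space F P -> iid_with_law F P X f -> Qrep_stmt F P X f 0.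
Proof. intros hP [hX1 hX2] n xs Rp. assert (HF : F (fun w => forall k, (k < n)%nat -> X k w = xs k)).
 { apply (F_finter F P (fun k w => X k w = xs k) n hP). intros; apply hX1. }
 simpl Q. unfold indic. destruct (excluded_middle_informative (Rp (fun _ => 0%nat))) as [H|H].
 - split; [eapply F_eq; [|exact HF]|]. + intros w; rewrite win_0; tauto.
   + rewrite (P_eq P _ (fun w => forall k, (k < n)%nat -> X k w = xs k)); [rewrite hX2; lra|]. intros w; rewrite win_0; tauto.
 - split; [eapply F_eq; [|apply (F_false F P hP)]|]. + intros w; rewrite win_0; tauto.
   + rewrite (P_eq P _ (fun _ => False)); [rewrite (P_false F P hP); lra|]. intros w; rewrite win_0; tauto. Qed.

Lemma Qrep_step {Om} F P (X : nat -> Om -> nat) f m : is_prob_space F P -> iid_with_law F P X f -> Qrep_stmt F P X f m ->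
  forall n xs Rp,
  F (fun w => (forall k, (k < n)%nat -> X k w = xs k) /\ Rp (win X n (S m) w)) /\
  cvs (fun x => fprod n (fun k => f (xs k)) * (f x * Q f m (fun ys => Rp (consn x ys))))
      (P (fun w => (forall k, (k < n)%nat -> X k w = xs k) /\ Rp (win X n (S m) w))).
Proof. intros hP hX IH n xs Rp.
 set (E := fun x w => (forall k, (k < S n)%nat -> X k w = upd xs n x k) /\ (fun ys => Rp (consn x ys)) (win X (S n) m w)).
 assert (HE : forall w, ((forall k, (k < n)%nat -> X k w = xs k) /\ Rp (win X n (S m) w)) <-> exists x, E x w).
 { intros w; rewrite win_S; unfold E, upd; split.
   - intros [H1 H2]; exists (X n w); split; auto. intros k Hk. destruct (Nat.eqb_spec k n); subst; auto. apply H1; lia.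
   - intros [x [H1 H2]]. assert (Hx : X n w = x) by (rewrite H1 by lia; rewrite Nat.eqb_refl; auto). subst x.
     split; auto. intros k Hk. rewrite H1 by lia. destruct (Nat.eqb_spec k n); auto; lia. }
 assert (HFE : forall x, F (E x)) by (intros x; apply (IH (S n) (upd xs n x) _)).
 split.
 - eapply F_eq; [intros w; symmetry; apply HE|]. apply (F_Union F P E hP HFE).
 - rewrite (P_eq P _ _ HE). eapply cvs_ext; [|apply (P_cadd F P E hP HFE)].
   + intros x. destruct (IH (S n) (upd xs n x) (fun ys => Rp (consn x ys))) as [_ HP]. unfold E; cbv beta.
     rewrite HP. simpl fprod.
     rewrite (fprod_ext n _ (fun k => f (xs k))). assert (Hu : upd xs n x n = x) by (unfold upd; rewrite Nat.eqb_refl; auto). rewrite Hu; ring.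
     intros k Hk; unfold upd; destruct (Nat.eqb_spec k n); auto; lia.
   + intros x y w Hxy [H1 _] [H2 _]. apply Hxy. pose proof (H1 n ltac:(lia)); pose proof (H2 n ltac:(lia)). unfold upd in *; rewrite Nat.eqb_refl in *; congruence. Qed.

Lemma Qrep {Om} F P (X : nat -> Om -> nat) f m : is_prob_space F P -> iid_with_law F P X f -> Qrep_stmt F P X f m.
Proof. intros hP hX. induction m. apply Qrep_0; auto.
 intros n xs Rp. destruct (Qrep_step F P X f m hP hX IHm n xs Rp) as [HF Hc]. split; auto.
 set (c := fprod n (fun k => f (xs k))) in *. simpl Q.
 destruct (Req_dec c 0) as [Hc0|Hc0].
 - rewrite Hc0, Rmult_0_l. eapply cvs_unique; [exact Hc|]. eapply cvs_ext; [|apply (cvs_finite (fun _ => 0) 0)]; [intros; simpl; rewrite Hc0; ring|auto].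
 - pose proof (cvs_scal _ _ (/ c) Hc) as H2.
   rewrite (series_value_cvs _ (/ c * P (fun w => (forall k, (k < n)%nat -> X k w = xs k) /\ Rp (win X n (S m) w)))). field; auto.
   eapply cvs_ext; [|exact H2]. intros x; simpl; field; auto. Qed.

Lemma Qsum {Om} F P (X : nat -> Om -> nat) f m Rp : is_prob_space F P -> iid_with_law F P X f ->
  cvs (fun x => f x * Q f m (fun ys => Rp (consn x ys))) (Q f (S m) Rp).
Proof. intros hP hX. destruct (Qrep_step F P X f m hP hX (Qrep F P X f m hP hX) 0%nat (fun _ => 0%nat) Rp) as [_ Hc].
 destruct (Qrep F P X f (S m) hP hX 0%nat (fun _ => 0%nat) Rp) as [_ HP]. rewrite HP in Hc. simpl fprod in Hc.
 eapply cvs_ext; [|rewrite <- (Rmult_1_l (Q f (S m) Rp)); exact Hc]. intros; simpl; ring. Qed.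

Lemma Q_ext f m (R1 R2 : (nat -> nat) -> Prop) : (forall ys, R1 ys <-> R2 ys) -> Q f m R1 = Q f m R2.
Proof. intros H; rewrite (pred_ext R1 R2 H); auto. Qed.

Lemma Q_event {Om} F P (X : nat -> Om -> nat) f m Rp : is_prob_space F P -> iid_with_law F P X f ->
  F (fun w => Rp (win X 0 m w)) /\ P (fun w => Rp (win X 0 m w)) = Q f m Rp.
Proof. intros hP hX. destruct (Qrep F P X f m hP hX 0%nat (fun _ => 0%nat) Rp) as [H1 H2]. simpl fprod in H2.
 assert (He : forall w, ((forall k, (k < 0)%nat -> X k w = 0%nat) /\ Rp (win X 0 m w)) <-> Rp (win X 0 m w)).
 { intros; split; [tauto|intros; split; auto; intros; lia]. }
 split; [eapply F_eq; [exact He|exact H1]|]. rewrite <- (P_eq P _ _ He), H2; ring. Qed.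


Definition cnt (A : nat -> Prop) m (ys : nat -> nat) := fsum m (fun k => indic A (ys k)).

Lemma indic_01 {T} (A : T -> Prop) y : indic A y = 0 \/ indic A y = 1.
Proof. unfold indic; destruct excluded_middle_informative; auto. Qed.
Lemma indic_bounds {T} (A : T -> Prop) y : 0 <= indic A y <= 1.
Proof. destruct (indic_01 A y) as [->| ->]; lra. Qed.

Lemma cnt_S A m x ys : cnt A (S m) (consn x ys) = indic A x + cnt A m ys.
Proof. unfold cnt. rewrite fsum_front. reflexivity. Qed.

Lemma exp_mult_nat n y : exp (INR n * y) = exp y ^ n.
Proof. induction n. simpl; rewrite Rmult_0_l, exp_0; auto. rewrite S_INR, <- tech_pow_Rmult, <- IHn, <- exp_plus. f_equal; ring. Qed.

Lemma chernoff_gen {Om} F P (X : nat -> Om -> nat) f (A : nat -> Prop) (lam K : R) :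
  is_prob_space F P -> iid_with_law F P X f -> (forall x, 0 <= f x) ->
  cvs (fun x => f x * exp (lam * indic A x)) K ->
  forall m c, Q f m (fun ys => c <= lam * cnt A m ys) <= exp (- c) * K ^ m.
Proof. intros hP hX hf HK m. induction m; intros c.
 - simpl. unfold indic at 1. destruct excluded_middle_informative as [H|H].
   + unfold cnt in H; simpl in H. assert (1 <= exp (-c)); [|lra]. rewrite <- exp_0. apply exp_le_mono. lra.
   + pose proof (exp_pos (-c)); lra.
 - pose proof (Qsum F P X f m (fun ys => c <= lam * cnt A (S m) ys) hP hX) as H1.
   replace (exp (- c) * K ^ S m) with (exp (- c) * K ^ m * K) by (simpl; ring).
   eapply cvs_le; [exact H1| apply (cvs_scal _ _ (exp (- c) * K ^ m) HK)|].
   intros x. simpl. rewrite (Q_ext f m _ (fun ys => c - lam * indic A x <= lam * cnt A m ys)).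
   + specialize (IHm (c - lam * indic A x)). replace (exp (- c) * K ^ m * (f x * exp (lam * indic A x)))
       with (f x * (exp (- (c - lam * indic A x)) * K ^ m)). apply Rmult_le_compat_l; auto.
     replace (- (c - lam * indic A x)) with (- c + lam * indic A x) by ring. rewrite exp_plus; ring.
   + intros ys. rewrite cnt_S. lra. Qed.

Lemma pow_le_exp y n : 0 <= 1 + y -> (1 + y) ^ n <= exp (INR n * y).
Proof. intros H. rewrite exp_mult_nat. apply pow_incr. split; auto. apply exp_ineq1_le. Qed.

Lemma exp_upper l : 0 <= l <= 1/2 -> exp l <= 1 + l + 2 * l ^ 2.
Proof. intros Hl. pose proof (exp_ineq1_le (- l)). rewrite exp_Ropp in H.
 assert (Hp : 0 < exp l) by apply exp_pos.
 assert (exp l * (1 - l) <= 1). { apply (Rmult_le_compat_l (exp l)) in H; [|lra]. rewrite Rinv_r in H; lra. }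
 assert (1 <= (1 - l) * (1 + l + 2 * l ^ 2)) by nra. nra. Qed.

Lemma exp_neg_upper l : 0 <= l -> exp (- l) <= 1 - l + l ^ 2.
Proof. intros Hl. pose proof (exp_ineq1_le l). rewrite exp_Ropp.
 assert (Hp : 0 < exp l) by apply exp_pos. apply (Rmult_le_reg_l (exp l)); auto. rewrite Rinv_r by lra.
 assert (1 <= (1 + l) * (1 - l + l ^ 2)) by nra. nra. Qed.

Lemma cvs_zero : cvs (fun _ => 0) 0.
Proof. apply (cvs_finite (fun _ => 0) 0); auto. Qed.

Lemma mul_nn_np a b : 0 <= a -> b <= 0 -> a * b <= 0.
Proof. intros; nra. Qed.

Lemma P_or_le {Om} F P (A B : Om -> Prop) : is_prob_space F P -> F A -> F B -> P (fun w => A w \/ B w) <= P A + P B.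
Proof. intros hP HA HB. rewrite (P_eq P _ (fun w => A w \/ (B w /\ ~ A w))).
 - rewrite (P_add F P); auto. pose proof (P_mono F P (fun w => B w /\ ~ A w) B hP (F_and F P _ _ hP HB (F_compl F P _ hP HA)) HB (fun w H => proj1 H)). lra.
   apply (F_and F P _ _ hP HB (F_compl F P _ hP HA)). tauto.
 - intros w; split; [intros [H|H]; [auto|destruct (classic (A w)); tauto]|tauto]. Qed.

Lemma Kval f (A : nat -> Prop) p lam : cvs f 1 -> cvs (fun x => f x * indic A x) p ->
  cvs (fun x => f x * exp (lam * indic A x)) (1 + (exp lam - 1) * p).
Proof. intros H1 H2. eapply cvs_ext; [|apply (cvs_plus _ _ _ _ H1 (cvs_scal _ _ (exp lam - 1) H2))].
 intros x; simpl. destruct (indic_01 A x) as [->| ->]. replace (lam * 0) with 0 by ring; rewrite exp_0; ring. rewrite !Rmult_1_r; ring. Qed.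

Lemma chernoff_two {Om} F P (X : nat -> Om -> nat) f (A : nat -> Prop) p t n :
  is_prob_space F P -> iid_with_law F P X f -> (forall x, 0 <= f x) -> cvs f 1 ->
  cvs (fun x => f x * indic A x) p -> 0 < t <= 1 -> (1 <= n)%nat ->
  F (fun w => t < Rabs (/ INR n * cnt A n (win X 0 n w) - p)) /\
  P (fun w => t < Rabs (/ INR n * cnt A n (win X 0 n w) - p)) <= 2 * exp (- (INR n * t ^ 2) / 8).
Proof. intros hP hX hf H1 Hp Ht Hn.
 assert (Hp0 : 0 <= p) by (apply (cvs_le (fun _ => 0) (fun x => f x * indic A x) 0 p); [apply cvs_zero|auto|intros; pose proof (indic_bounds A k); pose proof (hf k); nra]).
 assert (Hp1 : p <= 1). { apply (cvs_le (fun x => f x * indic A x) f p 1); auto. intros k. pose proof (indic_bounds A k); pose proof (hf k); nra. }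
 assert (HnR : 1 <= INR n) by (apply (le_INR 1); auto).
 set (lam := t / 4).
 set (U := fun ys => lam * (INR n * (p + t)) <= lam * cnt A n ys).
 set (L := fun ys => - lam * (INR n * (p - t)) <= - lam * cnt A n ys).
 destruct (Q_event F P X f n (fun ys => t < Rabs (/ INR n * cnt A n ys - p)) hP hX) as [HFb _].
 destruct (Q_event F P X f n U hP hX) as [HFU HPU].
 destruct (Q_event F P X f n L hP hX) as [HFL HPL].
 split; auto.
 eapply Rle_trans. apply (P_mono F P _ (fun w => U (win X 0 n w) \/ L (win X 0 n w)) hP HFb (F_or F P _ _ hP HFU HFL)).
 { intros w Hw. set (c := cnt A n (win X 0 n w)) in *. unfold U, L. fold c.
   assert (Hc : c = INR n * (/ INR n * c)) by (field; lra).
   destruct (Rcase_abs (/ INR n * c - p)) as [Hneg|Hpos]; [rewrite Rabs_left in Hw by lra|rewrite Rabs_right in Hw by lra].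
   - right. assert (c <= INR n * (p - t)) by nra. unfold lam; nra.
   - left. assert (INR n * (p + t) <= c) by nra. unfold lam; nra. }
 eapply Rle_trans. apply (P_or_le F P _ _ hP HFU HFL). rewrite HPU, HPL.
 assert (HU : Q f n U <= exp (- (INR n * t ^ 2) / 8)).
 { eapply Rle_trans. apply (chernoff_gen F P X f A lam _ hP hX hf (Kval f A p lam H1 Hp)).
   eapply Rle_trans. apply Rmult_le_compat_l. left; apply exp_pos. apply (pow_le_exp ((exp lam - 1) * p)).
   assert (0 <= exp lam - 1) by (pose proof (exp_ineq1_le lam); unfold lam in *; lra). nra.
   rewrite <- exp_plus. apply exp_le_mono. pose proof (exp_upper lam ltac:(unfold lam; lra)).
   assert (INR n * (p * (exp lam - 1 - lam - 2 * lam ^ 2)) <= 0). { apply mul_nn_np; [lra|]. nra. }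
   assert (INR n * (2 * lam ^ 2 * (p - 1)) <= 0). { apply mul_nn_np; [lra|]. unfold lam; nra. }
   unfold lam in *. nra. }
 assert (HL : Q f n L <= exp (- (INR n * t ^ 2) / 8)).
 { eapply Rle_trans. apply (chernoff_gen F P X f A (- lam) _ hP hX hf (Kval f A p (- lam) H1 Hp)).
   eapply Rle_trans. apply Rmult_le_compat_l. left; apply exp_pos. apply (pow_le_exp ((exp (- lam) - 1) * p)).
   assert (0 <= exp (- lam)) by (left; apply exp_pos). nra.
   rewrite <- exp_plus. apply exp_le_mono. pose proof (exp_neg_upper lam ltac:(unfold lam; lra)).
   assert (INR n * (p * (exp (- lam) - 1 + lam - lam ^ 2)) <= 0). { apply mul_nn_np; [lra|]. nra. }
   assert (INR n * (lam ^ 2 * (p - 1)) <= 0). { apply mul_nn_np; [lra|]. unfold lam; nra. }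
   unfold lam in *. nra. }
 lra. Qed.


Definition phi (t : R) : R := if Rlt_dec 0 t then t * ln t else 0.

Lemma phi_0 : phi 0 = 0.
Proof. unfold phi; destruct Rlt_dec; lra. Qed.

Lemma phi_pos t : 0 < t -> phi t = t * ln t.
Proof. unfold phi; destruct Rlt_dec; lra. Qed.

Lemma ln_nonpos t : 0 < t -> t <= 1 -> ln t <= 0.
Proof. intros. rewrite <- ln_1. apply ln_le_mono; lra. Qed.

Lemma phi_nonpos t : 0 <= t <= 1 -> phi t <= 0.
Proof. intros [H0 H1]. destruct H0 as [H0|<-]; [rewrite phi_pos by auto; pose proof (ln_nonpos t H0 H1); nra|rewrite phi_0; lra]. Qed.

Lemma phi_diff a b : 0 < a -> a <= b ->
  (b - a) * ln b <= phi b - phi a <= (b - a) * (ln b + 1).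
Proof. intros Ha Hab. rewrite !phi_pos by lra.
 assert (H1 : 0 <= ln b - ln a) by (pose proof (ln_le_mono a b Ha Hab); lra).
 assert (H2 : ln b - ln a <= b / a - 1).
 { replace (ln b - ln a) with (ln (b / a)). apply ln_le_sub1. apply Rdiv_lt_0_compat; lra.
   unfold Rdiv; rewrite ln_mult, ln_Rinv; try lra. apply Rinv_0_lt_compat; lra. }
 assert (H3 : a * (ln b - ln a) <= b - a).
 { apply (Rmult_le_compat_l a) in H2; [|lra]. replace (a * (b / a - 1)) with (b - a) in H2 by (field; lra). lra. }
 split; nra. Qed.

Lemma phi_lip m a b : 0 < m -> m <= a -> a <= 1 -> m <= b -> b <= 1 ->
  Rabs (phi a - phi b) <= Rabs (a - b) * (1 + - ln m).
Proof. intros Hm Ha Ha1 Hb Hb1. assert (Hlm : ln m <= 0) by (apply ln_nonpos; lra).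
 destruct (Rle_or_lt a b) as [Hab|Hab].
 - pose proof (phi_diff a b ltac:(lra) Hab). pose proof (ln_le_mono m b Hm Hb). pose proof (ln_nonpos b ltac:(lra) Hb1).
   rewrite (Rabs_left1 (a - b)) by lra. apply Rabs_le. split; nra.
 - pose proof (phi_diff b a ltac:(lra) ltac:(lra)). pose proof (ln_le_mono m a Hm Ha). pose proof (ln_nonpos a ltac:(lra) Ha1).
   rewrite (Rabs_right (a - b)) by lra. apply Rabs_le. split; nra. Qed.

Lemma phi_mono a b : 0 <= a -> a <= b -> b <= / exp 1 -> phi b <= phi a.
Proof. intros Ha Hab Hb. assert (Hb0 : 0 < / exp 1) by (apply Rinv_0_lt_compat, exp_pos).
 assert (Hlb : 0 < b -> ln b <= -1).
 { intros. replace (-1) with (ln (/ exp 1)) by (rewrite ln_Rinv, ln_exp; [ring| apply exp_pos]). apply ln_le_mono; auto. }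
 destruct Ha as [Ha|<-].
 - pose proof (phi_diff a b Ha Hab). specialize (Hlb ltac:(lra)). nra.
 - rewrite phi_0. destruct (Req_dec b 0) as [->|Hb0']; [rewrite phi_0; lra|].
   rewrite phi_pos by lra. specialize (Hlb ltac:(lra)). nra. Qed.

Lemma mul_nn_np' a b : 0 <= a -> b <= 0 -> a * b <= 0.
Proof. intros; nra. Qed.

Lemma ln_half_eps eps : 0 < eps -> - ln (eps / 2) = ln 2 + - ln eps.
Proof. intros. unfold Rdiv. rewrite ln_mult, ln_Rinv; lra. Qed.

Lemma ln2_pos : 0 < ln 2.
Proof. rewrite <- ln_1. apply ln_increasing; lra. Qed.

Lemma neg_phi_le_lam u eps : 0 < eps -> eps <= u -> u <= 1 -> - phi u <= u * - ln eps.
Proof. intros. rewrite phi_pos by lra. pose proof (ln_le_mono eps u H H0). nra. Qed.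

Lemma pw (a u Z eps : R) : 0 <= a <= 1 -> 0 <= u <= 1 -> 1/2 <= Z <= 1 -> 0 < eps -> 2 * eps <= / exp 1 ->
 Rabs (phi a - phi (if Rle_dec eps u then u / Z else 0)) <=
   3 * (1 + ln 2 + - ln eps) * Rabs (u - a)
   + (if Rle_dec eps u then u * (- ln eps) * (/ Z - 1) + (u / Z) * (- ln Z) else 0)
   + (if Rlt_dec a (2 * eps) then - phi a else 0).
Proof. intros Ha Hu HZ He He2.
 assert (He1 : 1 < exp 1) by (pose proof (exp_ineq1 1 ltac:(lra)); lra).
 assert (Hie : / exp 1 < 1). { apply (Rmult_lt_reg_l (exp 1)); [lra|]. rewrite Rinv_r by lra. lra. }
 assert (HL : 0 < - ln eps). { assert (ln eps < 0); [|lra]. rewrite <- ln_1. apply ln_increasing; lra. }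
 pose proof ln2_pos as Hl2.
 assert (HlZ : 0 <= - ln Z) by (pose proof (ln_nonpos Z ltac:(lra) ltac:(lra)); lra).
 assert (HZi : 0 <= / Z - 1). { assert (1 <= / Z); [|lra]. rewrite <- Rinv_1. apply Rinv_le_contravar; lra. }
 assert (T3 : 0 <= (if Rlt_dec a (2 * eps) then - phi a else 0)) by (destruct Rlt_dec; [pose proof (phi_nonpos a Ha)|]; lra).
 destruct (Rle_dec eps u) as [Hgam|Hgam].
 - assert (T2 : Rabs (phi u - phi (u / Z)) <= u * - ln eps * (/ Z - 1) + u / Z * - ln Z).
   { rewrite (phi_pos (u / Z)) by (apply Rdiv_lt_0_compat; lra). rewrite (phi_pos u) by lra.
     unfold Rdiv. rewrite ln_mult, ln_Rinv by (try apply Rinv_0_lt_compat; lra).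
     pose proof (neg_phi_le_lam u eps He Hgam ltac:(lra)) as Hp. rewrite phi_pos in Hp by lra.
     pose proof (ln_nonpos u ltac:(lra) ltac:(lra)).
     replace (u * ln u - u * / Z * (ln u + - ln Z)) with ((- (u * ln u)) * (/ Z - 1) + u * / Z * ln Z) by ring.
     eapply Rle_trans; [apply Rabs_triang|]. assert (0 <= - (u * ln u)) by nra. rewrite Rabs_right by (apply Rle_ge, Rmult_le_pos; lra).
     rewrite Rabs_left1. 2:{ apply mul_nn_np'; [apply Rmult_le_pos; [lra|left; apply Rinv_0_lt_compat; lra]|lra]. }
     assert (- (u * ln u) * (/ Z - 1) <= u * - ln eps * (/ Z - 1)) by (apply Rmult_le_compat_r; lra). lra. }
   assert (T1 : Rabs (phi a - phi u) <= 3 * (1 + ln 2 + - ln eps) * Rabs (u - a)).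
   { destruct (Rle_or_lt (eps / 2) a) as [Ha2|Ha2].
     - eapply Rle_trans. apply (phi_lip (eps / 2)); lra. rewrite ln_half_eps by lra. rewrite Rabs_minus_sym.
       pose proof (Rabs_pos (u - a)). nra.
     - assert (H1 : - phi a <= - phi (eps / 2)) by (pose proof (phi_mono a (eps/2) ltac:(lra) ltac:(lra) ltac:(lra)); lra).
       rewrite (phi_pos (eps / 2)) in H1 by lra. replace (- (eps / 2 * ln (eps / 2))) with (eps / 2 * - ln (eps / 2)) in H1 by ring.
       rewrite ln_half_eps in H1 by lra.
       pose proof (neg_phi_le_lam u eps He Hgam ltac:(lra)).
       pose proof (phi_nonpos a Ha). pose proof (phi_nonpos u Hu).
       rewrite (Rabs_right (u - a)) by lra. apply Rabs_le; split; nra. }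
   eapply Rle_trans. replace (phi a - phi (u / Z)) with ((phi a - phi u) + (phi u - phi (u / Z))) by ring. apply Rabs_triang. lra.
 - rewrite phi_0, Rminus_0_r. rewrite Rabs_left1 by (apply phi_nonpos; lra).
   destruct (Rlt_dec a (2 * eps)) as [Ha2|Ha2]. { pose proof (Rabs_pos (u - a)). nra. }
   assert (- phi a <= a * - ln eps) by (apply neg_phi_le_lam; lra).
   rewrite Rabs_left by lra. nra. Qed.

Lemma sum_bound (f e : nat -> R) Z eps dl Sphi K :
 (forall x, 0 <= f x <= 1) -> (forall x, 0 <= e x <= 1) -> 1/2 <= Z <= 1 -> 0 < eps -> 2 * eps <= / exp 1 ->
 (forall K, fsum K (fun x => Rabs (e x - f x)) <= dl) ->
 (forall K, fsum K (fun x => if Rle_dec eps (e x) then e x else 0) <= Z) ->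
 (forall K, fsum K (fun x => if Rlt_dec (f x) (2 * eps) then - phi (f x) else 0) <= Sphi) ->
 fsum K (fun x => Rabs (phi (f x) - phi (if Rle_dec eps (e x) then e x / Z else 0)))
   <= 3 * (1 + ln 2 + - ln eps) * dl + (- ln eps + 2) * (1 - Z) + Sphi.
Proof. intros Hf He HZ Heps He2 Hdl HG HS.
 set (C := (- ln eps) * (/ Z - 1) + / Z * (- ln Z)).
 eapply Rle_trans. apply fsum_le. intros x _. apply (pw (f x) (e x) Z eps (Hf x) (He x) HZ Heps He2).
 rewrite !fsum_plus, fsum_scal.
 rewrite (fsum_ext K (fun x => if Rle_dec eps (e x) then e x * - ln eps * (/ Z - 1) + e x / Z * - ln Z else 0) (fun x => C * (if Rle_dec eps (e x) then e x else 0))).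
 2:{ intros x _; unfold C; destruct Rle_dec; [field; lra|ring]. }
 rewrite fsum_scal.
 assert (HL : 0 < - ln eps).
 { assert (He1 : 1 < exp 1) by (pose proof (exp_ineq1 1 ltac:(lra)); lra).
   assert (Hie : / exp 1 < 1). { apply (Rmult_lt_reg_l (exp 1)); [lra|]. rewrite Rinv_r by lra. lra. }
   assert (ln eps < 0); [|lra]. rewrite <- ln_1. apply ln_increasing; lra. }
 assert (HlZ : - ln Z <= / Z - 1).
 { rewrite <- ln_Rinv by lra. apply ln_le_sub1. apply Rinv_0_lt_compat; lra. }
 assert (HZi : 0 <= / Z - 1). { assert (1 <= / Z); [|lra]. rewrite <- Rinv_1. apply Rinv_le_contravar; lra. }
 assert (HZ2 : / Z - 1 <= 2 * (1 - Z)). { replace (/ Z - 1) with ((1 - Z) / Z) by (field; lra).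
   apply (Rmult_le_reg_r Z); [lra|]. unfold Rdiv. rewrite Rmult_assoc, Rinv_l by lra. nra. }
 assert (HlZ0 : 0 <= - ln Z) by (pose proof (ln_nonpos Z ltac:(lra) ltac:(lra)); lra).
 assert (HC : 0 <= C). { unfold C. apply Rplus_le_le_0_compat; apply Rmult_le_pos; try lra; left; apply Rinv_0_lt_compat; lra. }
 assert (T1 : 3 * (1 + ln 2 + - ln eps) * fsum K (fun x => Rabs (e x - f x)) <= 3 * (1 + ln 2 + - ln eps) * dl).
 { apply Rmult_le_compat_l; [pose proof ln2_pos; lra|apply Hdl]. }
 assert (T2 : C * fsum K (fun x => if Rle_dec eps (e x) then e x else 0) <= C * Z) by (apply Rmult_le_compat_l; auto).
 assert (T3 : C * Z <= (- ln eps + 2) * (1 - Z)).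
 { unfold C. replace ((- ln eps * (/ Z - 1) + / Z * - ln Z) * Z) with (- ln eps * (1 - Z) + - ln Z) by (field; lra). nra. }
 specialize (HS K). lra. Qed.


Lemma geom_eq r J : fsum J (fun j => r ^ j) * (1 - r) = 1 - r ^ J.
Proof. induction J; simpl fsum; [simpl; ring|]. rewrite Rmult_plus_distr_r, IHJ. simpl; ring. Qed.

Lemma geom_le r J : 0 <= r < 1 -> fsum J (fun j => r ^ j) <= / (1 - r).
Proof. intros Hr. pose proof (geom_eq r J). pose proof (pow_le r J ltac:(lra)).
 apply (Rmult_le_reg_r (1 - r)); [lra|]. rewrite Rinv_l by lra. lra. Qed.

Lemma ageom_eq r J : fsum J (fun j => INR j * r ^ j) * (1 - r) ^ 2 = r - INR J * r ^ J + (INR J - 1) * r ^ (S J).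
Proof. induction J; simpl fsum; [simpl; ring|]. rewrite Rmult_plus_distr_r, IHJ. rewrite S_INR. simpl; ring. Qed.

Lemma ageom_le r J : 0 <= r < 1 -> fsum J (fun j => INR j * r ^ j) <= r / (1 - r) ^ 2.
Proof. intros Hr. pose proof (ageom_eq r J). pose proof (pow_le r J ltac:(lra)). pose proof (pos_INR J).
 assert (Hq : 0 < (1 - r) ^ 2) by (apply pow_lt; lra).
 apply (Rmult_le_reg_r ((1 - r) ^ 2)); auto. unfold Rdiv; rewrite Rmult_assoc, Rinv_l by lra.
 rewrite H. simpl pow. assert (r ^ J * (- INR J + (INR J - 1) * r) <= 0).
 { apply mul_nn_np; auto. nra. } nra. Qed.

Lemma fsum_ind_lt N0 K c : 0 <= c -> fsum K (fun x => if lt_dec x N0 then c else 0) <= INR N0 * c.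
Proof. intros Hc. destruct (le_lt_dec K N0) as [HK|HK].
 - eapply Rle_trans. apply (fsum_le _ _ (fun _ => c)). intros; destruct lt_dec; lra.
   rewrite fsum_const. apply Rmult_le_compat_r; auto. apply le_INR; auto.
 - replace K with (N0 + (K - N0))%nat by lia. rewrite fsum_split.
   rewrite (fsum_ext N0 _ (fun _ => c)), fsum_const. 2:{ intros; destruct lt_dec; lia || auto. }
   rewrite (fsum_ext (K - N0) _ (fun _ => 0)), fsum_const. lra. intros; destruct lt_dec; lia || auto. Qed.

Lemma fsum_from_m m K (g : nat -> R) B : (forall x, 0 <= g x) ->
  (forall J, fsum J (fun j => g (m + j)%nat) <= B) -> fsum K (fun x => if le_dec m x then g x else 0) <= B.
Proof. intros Hg HB. assert (HB0 : 0 <= B) by (specialize (HB O); simpl in HB; lra).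
 destruct (le_lt_dec K m) as [HK|HK].
 - rewrite (fsum_ext K _ (fun _ => 0)), fsum_const; [lra|]. intros; destruct le_dec; lia || auto.
 - replace K with (m + (K - m))%nat by lia. rewrite fsum_split.
   rewrite (fsum_ext m _ (fun _ => 0)), fsum_const. 2:{ intros; destruct le_dec; lia || auto. }
   rewrite (fsum_ext (K - m) _ (fun j => g (m + j)%nat)). specialize (HB (K - m)%nat); lra.
   intros; destruct le_dec; lia || auto. Qed.

Lemma exp_r al x : exp (- al * INR x) = exp (- al) ^ x.
Proof. rewrite <- exp_mult_nat. f_equal; ring. Qed.

Lemma tail_bound (f : nat -> R) al k1 N0 m a c : (forall x, 0 <= f x) -> 0 < al -> 0 < k1 ->
  (forall x, (N0 <= x)%nat -> f x <= k1 * exp (- al * INR x)) -> (N0 <= m)%nat -> 0 <= a -> 0 <= c ->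
  forall K, fsum K (fun x => if le_dec m x then f x * (a * INR x + c) else 0) <=
    k1 * exp (- al) ^ m * ((a * INR m + c) * / (1 - exp (- al)) + a * (exp (- al) / (1 - exp (- al)) ^ 2)).
Proof. intros hf0 Hal Hk1 Hfb Hm Ha Hc K. set (r := exp (- al)).
 assert (Hr : 0 <= r < 1). { unfold r; split; [left; apply exp_pos|]. rewrite <- exp_0. apply exp_increasing; lra. }
 apply fsum_from_m. { intros x; apply Rmult_le_pos; auto. pose proof (pos_INR x); nra. }
 intros J. eapply Rle_trans. apply (fsum_le _ _ (fun j => k1 * r ^ m * ((a * INR m + c) * r ^ j + a * (INR j * r ^ j)))).
 { intros j _. pose proof (Hfb (m + j)%nat ltac:(lia)) as H. rewrite exp_r in H. fold r in H. rewrite pow_add in H.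
   cbv beta. rewrite plus_INR. pose proof (pos_INR j); pose proof (pos_INR m). pose proof (pow_le r j ltac:(lra)).
   pose proof (pow_le r m ltac:(lra)). pose proof (hf0 (m + j)%nat).
   assert (0 <= a * (INR m + INR j) + c) by nra.
   apply (Rmult_le_compat_r (a * (INR m + INR j) + c)) in H; auto. eapply Rle_trans; [exact H|]. right; ring. }
 rewrite fsum_scal, fsum_plus, !fsum_scal. pose proof (geom_le r J Hr). pose proof (ageom_le r J Hr).
 pose proof (pow_le r m ltac:(lra)). pose proof (pos_INR m).
 apply Rmult_le_compat_l. apply Rmult_le_pos; lra. apply Rplus_le_compat; apply Rmult_le_compat_l. nra. apply geom_le; auto. lra. apply ageom_le; auto. Qed.

Lemma small_sums (f : nat -> R) al k0 k1 N0 : (forall x, 0 <= f x <= 1) -> 0 < al -> 0 < k0 -> 0 < k1 ->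
  (forall x, (N0 <= x)%nat -> k0 * exp (- al * INR x) <= f x <= k1 * exp (- al * INR x)) ->
  exists A1 A2 A3, 0 <= A1 /\ 0 <= A2 /\ 0 <= A3 /\ forall eps, 0 < eps -> 2 * eps <= / exp 1 ->
   (forall K, fsum K (fun x => if Rlt_dec (f x) (2 * eps) then f x else 0) <= A3 * eps) /\
   (forall K, fsum K (fun x => if Rlt_dec (f x) (2 * eps) then - phi (f x) else 0) <= eps * (A1 * (- ln eps) + A2)).
Proof. intros hf Hal Hk0 Hk1 Hfb. set (r := exp (- al)).
 assert (Hr : 0 < r < 1). { unfold r; split; [apply exp_pos|]. rewrite <- exp_0. apply exp_increasing; lra. }
 set (c0 := Rabs (ln k0)).
 assert (Hc0 : 0 <= c0) by apply Rabs_pos.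
 assert (Hq : 0 < / (1 - r)) by (apply Rinv_0_lt_compat; lra).
 assert (Hq2 : 0 < r / (1 - r) ^ 2) by (apply Rdiv_lt_0_compat; [lra|apply pow_lt; lra]).
 exists (2 * INR N0 + 2 * k1 / k0 * / (1 - r)),
        (2 * k1 / k0 * ((al * (INR N0 + 1) + 2 * c0) * / (1 - r) + al * (r / (1 - r) ^ 2))),
        (2 * INR N0 + 2 * k1 / k0 * / (1 - r)).
 assert (Hkk : 0 < 2 * k1 / k0) by (apply Rdiv_lt_0_compat; lra).
 pose proof (pos_INR N0).
 split; [apply Rplus_le_le_0_compat; [lra|apply Rmult_le_pos; lra]|].
 split; [apply Rmult_le_pos; [lra|apply Rplus_le_le_0_compat; apply Rmult_le_pos; nra]|].
 split; [apply Rplus_le_le_0_compat; [lra|apply Rmult_le_pos; lra]|].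
 intros eps Heps He2.
 assert (He1 : 1 < exp 1) by (pose proof (exp_ineq1 1 ltac:(lra)); lra).
 assert (Hie : / exp 1 < 1). { apply (Rmult_lt_reg_l (exp 1)); [lra|]. rewrite Rinv_r by lra. lra. }
 assert (HL : 0 < - ln eps). { assert (ln eps < 0); [|lra]. rewrite <- ln_1. apply ln_increasing; lra. }
 destruct (pow_lt_1_zero r ltac:(rewrite Rabs_right; lra) (2 * eps / k0) ltac:(apply Rdiv_lt_0_compat; lra)) as [N1 HN1].
 destruct (ex_least (fun m => (N0 <= m)%nat /\ k0 * r ^ m < 2 * eps)) as [ms [[Hms1 Hms2] Hmin]].
 { exists (max N0 N1). split; [lia|]. specialize (HN1 (max N0 N1) ltac:(lia)). rewrite Rabs_right in HN1 by (apply Rle_ge, pow_le; lra).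
   apply (Rmult_lt_compat_l k0) in HN1; auto. replace (k0 * (2 * eps / k0)) with (2 * eps) in HN1 by (field; lra). lra. }
 assert (Hge : forall x, (N0 <= x)%nat -> f x < 2 * eps -> (ms <= x)%nat).
 { intros x Hx Hfx. destruct (le_lt_dec ms x) as [|Hlt]; auto. exfalso. apply (Hmin x Hlt). split; auto.
   destruct (Hfb x Hx) as [H1 _]. rewrite exp_r in H1. fold r in H1. lra. }
 assert (Hrms : k1 * r ^ ms <= 2 * k1 / k0 * eps).
 { apply (Rmult_le_reg_l k0); auto. replace (k0 * (2 * k1 / k0 * eps)) with (k1 * (2 * eps)) by (field; lra).
   pose proof (pow_le r ms ltac:(lra)). nra. }
 assert (Hrms0 : 0 <= k1 * r ^ ms) by (pose proof (pow_le r ms ltac:(lra)); nra).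
 split.
 - intros K. eapply Rle_trans. apply (fsum_le _ _ (fun x => (if lt_dec x N0 then 2 * eps else 0) + (if le_dec ms x then f x * (0 * INR x + 1) else 0))).
   { intros x _. destruct (Rlt_dec (f x) (2 * eps)); destruct (lt_dec x N0); destruct (le_dec ms x); try (pose proof (hf x); lra).
     exfalso; apply n0; apply Hge; auto; lia. }
   rewrite fsum_plus. pose proof (fsum_ind_lt N0 K (2 * eps) ltac:(lra)).
   pose proof (tail_bound f al k1 N0 ms 0 1 (fun x => proj1 (hf x)) Hal Hk1 (fun x Hx => proj2 (Hfb x Hx)) Hms1 ltac:(lra) ltac:(lra) K).
   fold r in H1. assert (k1 * r ^ ms * ((0 * INR ms + 1) * / (1 - r) + 0 * (r / (1 - r) ^ 2)) <= 2 * k1 / k0 * eps * / (1 - r)).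
   { replace ((0 * INR ms + 1) * / (1 - r) + 0 * (r / (1 - r) ^ 2)) with (/ (1 - r)) by ring. apply Rmult_le_compat_r; lra. }
   nra.
 - assert (Hmsb : al * INR ms <= al * (INR N0 + 1) + c0 + - ln eps).
   { destruct ms as [|p]. { simpl; nra. } destruct (le_lt_dec (S p) N0) as [Hle|Hlt].
     - apply le_INR in Hle. nra.
     - assert (Hp : ~ (k0 * r ^ p < 2 * eps)) by (intros Hc; apply (Hmin p ltac:(lia)); split; [lia|auto]).
       assert (Hp2 : ln (2 * eps) <= ln (k0 * r ^ p)) by (apply ln_le_mono; lra).
       unfold r in Hp2. rewrite <- exp_r in Hp2. rewrite (ln_mult k0) in Hp2 by (auto; apply exp_pos). rewrite ln_exp in Hp2.
       rewrite (ln_mult 2 eps) in Hp2 by lra. pose proof ln2_pos. rewrite S_INR.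
       assert (ln k0 <= c0) by (unfold c0; apply RRle_abs). nra. }
   intros K. eapply Rle_trans. apply (fsum_le _ _ (fun x => (if lt_dec x N0 then 2 * eps * - ln eps else 0) + (if le_dec ms x then f x * (al * INR x + c0) else 0))).
   { intros x _. destruct (Rlt_dec (f x) (2 * eps)) as [Hf2|Hf2].
     2:{ pose proof (pos_INR x). pose proof (hf x). assert (0 <= f x * (al * INR x + c0)) by (apply Rmult_le_pos; nra). assert (0 <= 2 * eps * - ln eps) by nra. destruct (lt_dec x N0); destruct (le_dec ms x); lra. }
     assert (Hn1 : - phi (f x) <= 2 * eps * - ln eps).
     { pose proof (phi_mono (f x) (2 * eps) ltac:(pose proof (hf x); lra) ltac:(lra) He2).
       rewrite phi_pos in H0 by lra. assert (ln eps <= ln (2 * eps)) by (apply ln_le_mono; lra). nra. }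
     assert (Hn0 : 0 <= - phi (f x)) by (pose proof (phi_nonpos (f x) (hf x)); lra).
     destruct (lt_dec x N0) as [Hx|Hx].
     - destruct (le_dec ms x); [|lra]. pose proof (pos_INR x). pose proof (hf x). assert (0 <= f x * (al * INR x + c0)) by (apply Rmult_le_pos; nra). lra.
     - assert (Hmx : (ms <= x)%nat) by (apply Hge; auto; lia). destruct (le_dec ms x); [|lia].
       destruct (Hfb x ltac:(lia)) as [H1 _]. assert (Hpos : 0 < k0 * exp (- al * INR x)) by (pose proof (exp_pos (- al * INR x)); nra).
       rewrite phi_pos by lra. assert (Hl : ln (k0 * exp (- al * INR x)) <= ln (f x)) by (apply ln_le_mono; lra).
       rewrite (ln_mult k0) in Hl by (auto; apply exp_pos). rewrite ln_exp in Hl.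
       assert (- ln k0 <= c0) by (unfold c0; rewrite <- Rabs_Ropp; apply RRle_abs). pose proof (hf x). nra. }
   rewrite fsum_plus. pose proof (fsum_ind_lt N0 K (2 * eps * - ln eps) ltac:(nra)).
   pose proof (tail_bound f al k1 N0 ms al c0 (fun x => proj1 (hf x)) Hal Hk1 (fun x Hx => proj2 (Hfb x Hx)) Hms1 ltac:(lra) Hc0 K).
   fold r in H1.
   assert (Hfin : k1 * r ^ ms * ((al * INR ms + c0) * / (1 - r) + al * (r / (1 - r) ^ 2)) <=
                  2 * k1 / k0 * eps * ((al * (INR N0 + 1) + 2 * c0 + - ln eps) * / (1 - r) + al * (r / (1 - r) ^ 2))).
   { apply Rmult_le_compat; try lra. apply Rplus_le_le_0_compat; apply Rmult_le_pos; try lra. pose proof (pos_INR ms); nra.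
     apply Rplus_le_compat_r. apply Rmult_le_compat_r; lra. }
   nra. Qed.


Lemma indic_ext {T} (A B : T -> Prop) y : (A y <-> B y) -> indic A y = indic B y.
Proof. intros H. unfold indic; do 2 destruct excluded_middle_informative; tauto. Qed.
Lemma indic_true {T} (A : T -> Prop) y : A y -> indic A y = 1.
Proof. unfold indic; destruct excluded_middle_informative; tauto. Qed.
Lemma indic_false {T} (A : T -> Prop) y : ~ A y -> indic A y = 0.
Proof. unfold indic; destruct excluded_middle_informative; tauto. Qed.

Lemma emp_ext {Om} (X : nat -> Om -> nat) n w A B : (forall y, A y <-> B y) -> emp X n w A = emp X n w B.
Proof. intros H; rewrite (pred_ext A B H); auto. Qed.

Lemma emp_bounds {Om} (X : nat -> Om -> nat) n w A : (1 <= n)%nat -> 0 <= emp X n w A <= 1.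
Proof. intros Hn. unfold emp. assert (HnR : 1 <= INR n) by (apply (le_INR 1); auto).
 assert (0 <= fsum n (fun k => indic A (X k w)) <= INR n).
 { split. apply fsum_nonneg; intros; apply indic_bounds.
   rewrite <- (Rmult_1_r (INR n)), <- fsum_const. apply fsum_le; intros; apply indic_bounds. }
 split. apply Rmult_le_pos; [left; apply Rinv_0_lt_compat; lra|lra].
 apply (Rmult_le_reg_l (INR n)); [lra|]. rewrite <- Rmult_assoc, Rinv_r by lra. lra. Qed.

Lemma emp_mono {Om} (X : nat -> Om -> nat) n w (A B : nat -> Prop) : (forall y, A y -> B y) -> emp X n w A <= emp X n w B.
Proof. intros H. unfold emp. destruct n. simpl; lra. apply Rmult_le_compat_l.
 left; apply Rinv_0_lt_compat; apply lt_0_INR; lia.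
 apply fsum_le; intros k _. unfold indic. do 2 destruct excluded_middle_informative; try lra. exfalso; auto. Qed.

Lemma emp_compl {Om} (X : nat -> Om -> nat) n w A : (1 <= n)%nat -> emp X n w A + emp X n w (fun y => ~ A y) = 1.
Proof. intros Hn. unfold emp. rewrite <- Rmult_plus_distr_l, <- fsum_plus.
 rewrite (fsum_ext n _ (fun _ => 1)), fsum_const. field. apply not_0_INR; lia.
 intros k _. unfold indic. do 2 destruct excluded_middle_informative; tauto || lra. Qed.

Lemma emp_false {Om} (X : nat -> Om -> nat) n w : emp X n w (fun _ => False) = 0.
Proof. unfold emp. rewrite (fsum_ext n _ (fun _ => 0)), fsum_const. ring. intros; apply indic_false; auto. Qed.

Lemma inner_sum (A : nat -> Prop) y K :
  fsum K (fun x => indic A x * indic (fun z => z = x) y) = indic (fun z => (z < K)%nat /\ A z) y.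
Proof. induction K; simpl fsum.
 - rewrite indic_false; [auto|intros [? _]; lia].
 - rewrite IHK. destruct (Nat.lt_total y K) as [H|[H|H]].
   + rewrite (indic_false (fun z => z = K)) by lia. rewrite Rmult_0_r, Rplus_0_r. apply indic_ext. split; intros []; split; auto; lia.
   + subst y. rewrite (indic_true (fun z => z = K)) by auto. rewrite (indic_false (fun z => (z < K)%nat /\ A z)) by (intros []; lia).
     rewrite Rmult_1_r, Rplus_0_l. apply indic_ext. split; [intros; split; auto|intros []; auto].
   + rewrite (indic_false (fun z => z = K)) by lia. rewrite Rmult_0_r, Rplus_0_r. rewrite !indic_false; auto; intros []; lia.
Qed.

Definition ept {Om} (X : nat -> Om -> nat) n w x := emp X n w (fun y => y = x).

Lemma emp_points {Om} (X : nat -> Om -> nat) n w (A : nat -> Prop) K :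
  fsum K (fun x => indic A x * ept X n w x) = emp X n w (fun y => (y < K)%nat /\ A y).
Proof. unfold ept, emp. rewrite (fsum_ext K _ (fun x => / INR n * (indic A x * fsum n (fun k => indic (fun y => y = x) (X k w))))).
 2:{ intros; ring. } rewrite fsum_scal. f_equal.
 rewrite (fsum_ext K _ (fun x => fsum n (fun k => indic A x * indic (fun y => y = x) (X k w)))).
 2:{ intros; rewrite <- fsum_scal; auto. } rewrite fsum_swap. apply fsum_ext. intros k _. apply inner_sum. Qed.

Lemma bounded_obs {Om} (X : nat -> Om -> nat) n w : exists K0, forall k, (k < n)%nat -> (X k w < K0)%nat.
Proof. induction n. exists O; intros; lia. destruct IHn as [K0 H]. exists (max K0 (S (X n w))).
 intros k Hk. destruct (Nat.eq_dec k n); [subst; lia|]. specialize (H k ltac:(lia)); lia. Qed.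

Lemma emp_trunc {Om} (X : nat -> Om -> nat) n w (A : nat -> Prop) K0 K :
  (forall k, (k < n)%nat -> (X k w < K0)%nat) -> (K0 <= K)%nat ->
  emp X n w (fun y => (y < K)%nat /\ A y) = emp X n w A.
Proof. intros H HK. unfold emp. f_equal. apply fsum_ext. intros k Hk. apply indic_ext. specialize (H k Hk). split; [tauto|split; auto; lia]. Qed.

Lemma ept_zero {Om} (X : nat -> Om -> nat) n w K0 x :
  (forall k, (k < n)%nat -> (X k w < K0)%nat) -> (K0 <= x)%nat -> ept X n w x = 0.
Proof. intros H Hx. unfold ept, emp. rewrite (fsum_ext n _ (fun _ => 0)), fsum_const; [ring|].
 intros k Hk. apply indic_false. specialize (H k Hk). lia. Qed.

Lemma cond_pmf_eq {Om} (X : nat -> Om -> nat) n w eps x :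
  emp_cond_pmf X n w eps x = if Rle_dec eps (ept X n w x) then ept X n w x / emp X n w (Gamma X n w eps) else 0.
Proof. unfold emp_cond_pmf. destruct (Rle_dec eps (ept X n w x)) as [H|H].
 - f_equal. apply emp_ext. intros y; split; [intros []; auto|intros Hy; subst y; split; auto; unfold Gamma; fold (ept X n w x); lra].
 - rewrite (emp_ext X n w _ (fun _ => False)), emp_false. unfold Rdiv; ring.
   intros y; split; [intros [-> Hg]; unfold Gamma in Hg; fold (ept X n w x) in Hg; lra|tauto]. Qed.


Lemma entropy_phi b g L : 1 < b -> cvs (fun x => phi (g x)) L -> entropy b g = - (L / ln b).
Proof. intros Hb H. assert (Hlb : 0 < ln b) by (rewrite <- ln_1; apply ln_increasing; lra).
 unfold entropy. f_equal. apply series_value_cvs. replace (L / ln b) with (/ ln b * L) by (field; lra). eapply cvs_ext; [|apply (cvs_scal _ _ (/ ln b) H)].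
 intros x; simpl. unfold phi, logb. destruct Rlt_dec; [field; lra|ring]. Qed.

Lemma indic_lt_dec M x : indic (fun y => (y < M)%nat) x = if lt_dec x M then 1 else 0.
Proof. destruct lt_dec; [apply indic_true|apply indic_false]; auto. Qed.

Lemma ell1 {Om} (X : nat -> Om -> nat) n w f M pT t : (1 <= n)%nat -> (forall x, 0 <= f x) ->
  cvs (fun x => f x * indic (fun y => (M <= y)%nat) x) pT ->
  (forall x, (x < M)%nat -> Rabs (ept X n w x - f x) <= t) -> Rabs (emp X n w (fun y => (M <= y)%nat) - pT) <= t ->
  0 <= t -> forall K, fsum K (fun x => Rabs (ept X n w x - f x)) <= INR M * t + t + 2 * pT.
Proof. intros Hn hf0 HpT Hpt Htl Ht K.
 eapply Rle_trans. apply (fsum_le _ _ (fun x => t * (if lt_dec x M then 1 else 0) + (indic (fun y => (M <= y)%nat) x * ept X n w x + f x * indic (fun y => (M <= y)%nat) x))).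
 { intros x _. destruct (lt_dec x M) as [Hx|Hx].
   - rewrite indic_false by lia. specialize (Hpt x Hx). pose proof (hf0 x). lra.
   - rewrite indic_true by lia. pose proof (hf0 x). pose proof (emp_bounds X n w (fun y => y = x) Hn). unfold ept.
     apply Rabs_le; lra. }
 rewrite !fsum_plus, fsum_scal, emp_points.
 pose proof (fsum_ind_lt M K 1 ltac:(lra)). pose proof (cvs_fsum_le _ pT K (fun x => Rmult_le_pos _ _ (hf0 x) (proj1 (indic_bounds _ x))) HpT).
 pose proof (emp_mono X n w (fun y => (y < K)%nat /\ (M <= y)%nat) (fun y => (M <= y)%nat) ltac:(intros y []; auto)).
 apply Rabs_le_between in Htl. nra. Qed.

Lemma per_n {Om} (X : nat -> Om -> nat) n w f b eps t M pT A1 A2 A3 :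
 1 < b -> (1 <= n)%nat -> (forall x, 0 <= f x <= 1) -> cvs f 1 -> 0 < eps -> 2 * eps <= / exp 1 ->
 (forall K, fsum K (fun x => if Rlt_dec (f x) (2 * eps) then f x else 0) <= A3 * eps) ->
 (forall K, fsum K (fun x => if Rlt_dec (f x) (2 * eps) then - phi (f x) else 0) <= eps * (A1 * (- ln eps) + A2)) ->
 cvs (fun x => f x * indic (fun y => (M <= y)%nat) x) pT -> pT <= eps / 2 -> 0 <= t -> INR M * t + t <= eps ->
 (6 + A3) * eps <= 1/2 ->
 (forall x, (x < M)%nat -> Rabs (ept X n w x - f x) <= t) -> Rabs (emp X n w (fun y => (M <= y)%nat) - pT) <= t ->
 Rabs (entropy b f - entropy b (emp_cond_pmf X n w eps)) <=
   eps * (6 * (1 + ln 2 + - ln eps) + (- ln eps + 2) * (6 + A3) + A1 * (- ln eps) + A2) / ln b.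
Proof. intros Hb Hn hf H1 Heps He2 HS1 HSp HpT HpT2 Ht HMt HA3 Hpt Htl.
 assert (Hlb : 0 < ln b) by (rewrite <- ln_1; apply ln_increasing; lra).
 assert (He1 : 1 < exp 1) by (pose proof (exp_ineq1 1 ltac:(lra)); lra).
 assert (Hie : / exp 1 < 1). { apply (Rmult_lt_reg_l (exp 1)); [lra|]. rewrite Rinv_r by lra. lra. }
 assert (HL : 0 < - ln eps). { assert (ln eps < 0); [|lra]. rewrite <- ln_1. apply ln_increasing; lra. }
 assert (hf0 : forall x, 0 <= f x) by (intros x; apply hf).
 assert (HpT0 : 0 <= pT).
 { apply (cvs_le (fun _ => 0) _ 0 pT cvs_zero HpT). intros; apply Rmult_le_pos; [apply hf0|apply indic_bounds]. }
 set (e := ept X n w). set (Z := emp X n w (Gamma X n w eps)).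
 assert (Hdl : forall K, fsum K (fun x => Rabs (e x - f x)) <= 2 * eps).
 { intros K. eapply Rle_trans. apply (ell1 X n w f M pT t Hn hf0 HpT Hpt Htl Ht). lra. }
 assert (He : forall x, 0 <= e x <= 1) by (intros; apply emp_bounds; auto).
 destruct (bounded_obs X n w) as [K0 HK0].
 assert (HGi : forall x, (if Rle_dec eps (e x) then e x else 0) = indic (Gamma X n w eps) x * e x).
 { intros x. destruct Rle_dec; [rewrite indic_true by (unfold Gamma; change (emp X n w (fun y => y = x)) with (e x); lra)|rewrite indic_false by (unfold Gamma; change (emp X n w (fun y => y = x)) with (e x); lra)]; ring. }
 assert (HG : forall K, fsum K (fun x => if Rle_dec eps (e x) then e x else 0) <= Z).
 { intros K. rewrite (fsum_ext K _ _ (fun x _ => HGi x)). unfold e; rewrite emp_points. apply emp_mono. tauto. }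
 assert (H1Z : 1 - Z <= (6 + A3) * eps).
 { pose proof (emp_compl X n w (Gamma X n w eps) Hn). fold Z in H.
   rewrite <- (emp_trunc X n w _ K0 K0 HK0 (le_n _)) in H. rewrite <- emp_points in H. fold e in H.
   assert (fsum K0 (fun x => indic (fun y => ~ Gamma X n w eps y) x * e x) <=
           fsum K0 (fun x => 3 * Rabs (e x - f x) + (if Rlt_dec (f x) (2 * eps) then f x else 0))).
   { apply fsum_le; intros x _. pose proof (Rabs_pos (e x - f x)). pose proof (He x). pose proof (hf0 x).
     destruct (Rle_dec eps (e x)) as [Hg|Hg].
     - rewrite indic_false. destruct Rlt_dec; lra. unfold Gamma; change (emp X n w (fun y => y = x)) with (e x); lra.
     - rewrite indic_true by (unfold Gamma; change (emp X n w (fun y => y = x)) with (e x); lra). destruct Rlt_dec.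
       + pose proof (Rle_abs (e x - f x)). lra.
       + rewrite Rabs_left by lra. lra. }
   rewrite fsum_plus, fsum_scal in H0. pose proof (Hdl K0). pose proof (HS1 K0). lra. }
 assert (HZ : 1/2 <= Z <= 1). { split; [lra|apply emp_bounds; auto]. }
 set (g := fun x => if Rle_dec eps (e x) then e x / Z else 0).
 assert (HB := fun K => sum_bound f e Z eps (2 * eps) (eps * (A1 * (- ln eps) + A2)) K hf He HZ Heps He2 Hdl HG HSp).
 destruct (cvs_nonneg_bounded (fun x => - phi (f x)) (eps * (A1 * (- ln eps) + A2) + - ln eps)) as [lf [Hlf _]].
 { intros x; pose proof (phi_nonpos (f x) (hf x)); lra. }
 { intros K. eapply Rle_trans. apply (fsum_le _ _ (fun x => (if Rlt_dec (f x) (2 * eps) then - phi (f x) else 0) + - ln eps * f x)).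
   { intros x _. destruct Rlt_dec as [Hx|Hx].
     - pose proof (hf0 x). nra.
     - pose proof (neg_phi_le_lam (f x) eps Heps ltac:(lra) (proj2 (hf x))). lra. }
   rewrite fsum_plus, fsum_scal. pose proof (HSp K). pose proof (cvs_fsum_le f 1 K hf0 H1). nra. }
 assert (Hcf : cvs (fun x => phi (f x)) (- lf)).
 { replace (- lf) with (-1 * lf) by ring. eapply cvs_ext; [|apply (cvs_scal _ _ (-1) Hlf)]. intros; simpl; ring. }
 assert (Hcg0 : cvs (fun x => phi (g x)) (fsum K0 (fun x => phi (g x)))).
 { apply cvs_finite. intros x Hx. unfold g. replace (e x) with 0 by (symmetry; apply (ept_zero X n w K0 x HK0 Hx)).
   destruct Rle_dec; [lra|apply phi_0]. }
 assert (Hcg : cvs (fun x => phi (emp_cond_pmf X n w eps x)) (fsum K0 (fun x => phi (g x)))).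
 { eapply cvs_ext; [|exact Hcg0]. intros x; simpl. rewrite cond_pmf_eq. reflexivity. }
 rewrite (entropy_phi b f _ Hb Hcf), (entropy_phi b _ _ Hb Hcg).
 set (Lg := fsum K0 (fun x => phi (g x))) in *.
 assert (Hd1 : - lf - Lg <= 3 * (1 + ln 2 + - ln eps) * (2 * eps) + (- ln eps + 2) * (1 - Z) + eps * (A1 * (- ln eps) + A2)).
 { apply (cvs_le_bound _ _ _ (cvs_minus _ _ _ _ Hcf Hcg0)).
   intros K. eapply Rle_trans; [apply Rle_abs|]. eapply Rle_trans; [apply fsum_abs|]. apply HB. }
 assert (Hd2 : Lg - - lf <= 3 * (1 + ln 2 + - ln eps) * (2 * eps) + (- ln eps + 2) * (1 - Z) + eps * (A1 * (- ln eps) + A2)).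
 { apply (cvs_le_bound _ _ _ (cvs_minus _ _ _ _ Hcg0 Hcf)).
   intros K. eapply Rle_trans; [apply Rle_abs|]. eapply Rle_trans; [apply fsum_abs|].
   eapply Rle_trans; [|apply (HB K)]. right; apply fsum_ext; intros; apply Rabs_minus_sym. }
 replace (- (- lf / ln b) - - (Lg / ln b)) with ((Lg - - lf) / ln b) by (field; lra).
 unfold Rdiv. rewrite Rabs_mult, (Rabs_right (/ ln b)) by (left; apply Rinv_0_lt_compat; lra).
 apply Rmult_le_compat_r; [left; apply Rinv_0_lt_compat; lra|].
 assert ((- ln eps + 2) * (1 - Z) <= (- ln eps + 2) * ((6 + A3) * eps)) by (apply Rmult_le_compat_l; lra).
 apply Rabs_le; split; nra. Qed.


Lemma ln_growth d a0 a1 : 0 < d -> 0 <= a0 -> 0 <= a1 -> exists U, 0 <= U /\ forall u, U <= u -> a0 + a1 * u <= exp (d * u).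
Proof. intros Hd Ha0 Ha1. exists (1 + 4 * (a0 + a1) / d ^ 2). assert (Hd2 : 0 < d ^ 2) by (apply pow_lt; lra).
 assert (0 <= 4 * (a0 + a1) / d ^ 2) by (apply Rmult_le_pos; [lra|left; apply Rinv_0_lt_compat; lra]).
 split; [lra|]. intros u Hu.
 replace (d * u) with (d * u / 2 + d * u / 2) by field. rewrite exp_plus.
 pose proof (exp_ineq1_le (d * u / 2)). assert (0 <= d * u / 2) by (apply Rmult_le_pos; [nra|lra]).
 assert (H4 : 4 * (a0 + a1) <= d ^ 2 * u).
 { assert (Hq : 4 * (a0 + a1) / d ^ 2 <= u) by lra. apply (Rmult_le_compat_l (d ^ 2)) in Hq; [|lra].
   replace (d ^ 2 * (4 * (a0 + a1) / d ^ 2)) with (4 * (a0 + a1)) in Hq by (field; lra). lra. }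
 assert (a0 + a1 * u <= (a0 + a1) * u) by nra.
 assert ((a0 + a1) * u * 4 <= d ^ 2 * u * u) by nra.
 nra. Qed.

Lemma nat_large U : exists n2, (1 <= n2)%nat /\ forall n, (n2 <= n)%nat -> U <= ln (INR n).
Proof. destruct (archimed (exp U)) as [H1 _]. set (z := up (exp U)) in *.
 assert (Hz : (0 <= z)%Z). { apply le_IZR. pose proof (exp_pos U); lra. }
 exists (S (Z.to_nat z)). split; [lia|]. intros n Hn.
 assert (HnR : INR (S (Z.to_nat z)) <= INR n) by (apply le_INR; auto).
 rewrite S_INR, INR_IZR_INZ, Z2Nat.id in HnR by auto.
 rewrite <- (ln_exp U). apply ln_le_mono; [apply exp_pos|lra]. Qed.

Lemma exp_decay y k : 0 < y -> (1 <= k)%nat -> exp (- y / 8) <= (8 * INR k / y) ^ k.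
Proof. intros Hy Hk. assert (HkR : 1 <= INR k) by (apply (le_INR 1); auto).
 assert (H1 : y / (8 * INR k) <= exp (y / (8 * INR k))) by (pose proof (exp_ineq1_le (y / (8 * INR k))); lra).
 assert (H0 : 0 < y / (8 * INR k)) by (apply Rdiv_lt_0_compat; lra).
 assert (H2 : (y / (8 * INR k)) ^ k <= exp (y / 8)).
 { replace (y / 8) with (INR k * (y / (8 * INR k))) by (field; lra). rewrite exp_mult_nat. apply pow_incr; lra. }
 assert (H3 : 0 < (y / (8 * INR k)) ^ k) by (apply pow_lt; auto).
 replace (- y / 8) with (- (y / 8)) by field. rewrite exp_Ropp.
 replace (8 * INR k / y) with (/ (y / (8 * INR k))) by (field; lra). rewrite pow_inv.
 apply Rinv_le_contravar; auto. Qed.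

Lemma telescope m J : (1 <= m)%nat -> fsum J (fun j => / (INR (m + j) * INR (m + j + 1))) = / INR m - / INR (m + J).
Proof. intros Hm. assert (HmR : 1 <= INR m) by (apply (le_INR 1); auto). induction J.
 - simpl. rewrite Nat.add_0_r; ring.
 - simpl fsum. rewrite IHJ. replace (m + S J)%nat with (m + J + 1)%nat by lia.
   assert (Ha : 1 <= INR (m + J)) by (apply (le_INR 1); lia). rewrite (plus_INR (m + J) 1). simpl (INR 1).
   field. lra. Qed.

Lemma emp_win {Om} (X : nat -> Om -> nat) n w A : emp X n w A = / INR n * cnt A n (win X 0 n w).
Proof. unfold emp, cnt. f_equal. apply fsum_ext. intros k Hk. unfold win.
 destruct (Nat.ltb_spec k n); [|lia]. reflexivity. Qed.

Lemma point_p f x : cvs (fun y => f y * indic (fun z => z = x) y) (f x).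
Proof. replace (f x) with (fsum (S x) (fun y => f y * indic (fun z => z = x) y)).
 apply cvs_finite. intros k Hk. rewrite indic_false by lia. ring.
 simpl fsum. rewrite (fsum_ext x _ (fun _ => 0)), fsum_const. rewrite indic_true by auto. ring.
 intros k Hk; rewrite indic_false by lia; ring. Qed.

Definition bad {Om} (X : nat -> Om -> nat) f n M t pT w :=
  (exists x, (x < M)%nat /\ t < Rabs (ept X n w x - f x)) \/ t < Rabs (emp X n w (fun y => (M <= y)%nat) - pT).

Lemma bad_prob {Om} F P (X : nat -> Om -> nat) f n M t pT : is_prob_space F P -> iid_with_law F P X f ->
  (forall x, 0 <= f x) -> cvs f 1 -> cvs (fun x => f x * indic (fun y => (M <= y)%nat) x) pT ->
  0 < t <= 1 -> (1 <= n)%nat ->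
  F (bad X f n M t pT) /\ P (bad X f n M t pT) <= 2 * (INR M + 1) * exp (- (INR n * t ^ 2) / 8).
Proof. intros hP hX hf0 H1 HpT Ht Hn. set (c := 2 * exp (- (INR n * t ^ 2) / 8)).
 set (Cj := fun j => if lt_dec j M then (fun w => t < Rabs (ept X n w j - f j))
                     else if Nat.eq_dec j M then (fun w => t < Rabs (emp X n w (fun y => (M <= y)%nat) - pT)) else (fun _ => False)).
 assert (HC : forall j, F (Cj j) /\ P (Cj j) <= if lt_dec j (S M) then c else 0).
 { intros j. unfold Cj. destruct (lt_dec j M) as [Hj|Hj].
   - destruct (chernoff_two F P X f (fun z => z = j) (f j) t n hP hX hf0 H1 (point_p f j) Ht Hn) as [HF HP].
     assert (He : forall w, t < Rabs (/ INR n * cnt (fun z => z = j) n (win X 0 n w) - f j) <-> t < Rabs (ept X n w j - f j)).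
     { intros w; unfold ept; rewrite emp_win; tauto. }
     split; [eapply F_eq; [exact He|exact HF]|]. rewrite <- (P_eq P _ _ He). destruct lt_dec; [exact HP|lia].
   - destruct (Nat.eq_dec j M) as [Hj2|Hj2].
     + destruct (chernoff_two F P X f (fun y => (M <= y)%nat) pT t n hP hX hf0 H1 HpT Ht Hn) as [HF HP].
       assert (He : forall w, t < Rabs (/ INR n * cnt (fun y => (M <= y)%nat) n (win X 0 n w) - pT) <-> t < Rabs (emp X n w (fun y => (M <= y)%nat) - pT)).
       { intros w; rewrite emp_win; tauto. }
       split; [eapply F_eq; [exact He|exact HF]|]. rewrite <- (P_eq P _ _ He). destruct lt_dec; [exact HP|lia].
     + split; [apply (F_false F P hP)|]. rewrite (P_false F P hP). destruct lt_dec; [|lra]. unfold c; pose proof (exp_pos (- (INR n * t ^ 2) / 8)); lra. }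
 assert (He : forall w, bad X f n M t pT w <-> exists j, Cj j w).
 { intros w; unfold bad, Cj; split.
   - intros [[x [Hx H]]|H]; [exists x; destruct lt_dec; [auto|lia]|exists M; destruct lt_dec; [lia|destruct Nat.eq_dec; [auto|lia]]].
   - intros [j Hj]. destruct (lt_dec j M); [left; eauto|]. destruct (Nat.eq_dec j M); [right; auto|contradiction]. }
 split.
 - eapply F_eq; [intros w; symmetry; apply He|]. apply (F_Union F P Cj hP (fun j => proj1 (HC j))).
 - rewrite (P_eq P _ _ He). apply (P_union_bound F P Cj (fun j => if lt_dec j (S M) then c else 0)); auto.
   + intros j; apply (HC j).
   + intros j; apply (HC j).
   + intros J. eapply Rle_trans. apply fsum_ind_lt. unfold c; pose proof (exp_pos (- (INR n * t ^ 2) / 8)); lra.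
     rewrite S_INR. unfold c. lra. Qed.

Lemma nat_above m1 a : exists m, (m1 <= m)%nat /\ a < INR m.
Proof. destruct (archimed a) as [H1 _]. exists (max m1 (Z.to_nat (up a)) + 1)%nat. split; [lia|].
 destruct (Z_le_gt_dec 0 (up a)) as [Hz|Hz].
 - rewrite plus_INR. assert (INR (Z.to_nat (up a)) <= INR (max m1 (Z.to_nat (up a)))) by (apply le_INR; lia).
   rewrite INR_IZR_INZ, Z2Nat.id in H by auto. simpl (INR 1). lra.
 - assert (a < 0). { apply Z.gt_lt in Hz. apply IZR_lt in Hz. lra. } pose proof (pos_INR (max m1 (Z.to_nat (up a)) + 1)). lra. Qed.

Lemma borel_cantelli {Om} F P (B : nat -> Om -> Prop) Cs m1 : is_prob_space F P -> (forall n, F (B n)) ->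
  (1 <= m1)%nat -> (forall n, (m1 <= n)%nat -> P (B n) <= Cs * / (INR n * INR (n + 1))) ->
  F (fun w => exists n0, forall n, (n0 <= n)%nat -> ~ B n w) /\ P (fun w => exists n0, forall n, (n0 <= n)%nat -> ~ B n w) = 1.
Proof. intros hP HB Hm1 HPB. set (E := fun w => exists n0, forall n, (n0 <= n)%nat -> ~ B n w).
 assert (HFE : F E).
 { apply (F_Union F P (fun n0 w => forall n, (n0 <= n)%nat -> ~ B n w) hP). intros n0.
   apply (F_Inter F P (fun n w => (n0 <= n)%nat -> ~ B n w) hP). intros n. destruct (le_dec n0 n) as [Hl|Hl].
   - eapply F_eq; [|apply (F_compl F P _ hP (HB n))]. intros w; tauto.
   - eapply F_eq; [|apply (F_true F P hP)]. intros w; tauto. }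
 assert (HCs : 0 <= Cs).
 { pose proof (HPB m1 (le_n _)). pose proof (P_nonneg F P _ hP (HB m1)).
   assert (Hp : 0 < INR m1 * INR (m1 + 1)) by (apply Rmult_lt_0_compat; apply lt_0_INR; lia).
   destruct (Rle_or_lt 0 Cs); auto. assert (Cs * / (INR m1 * INR (m1 + 1)) < 0); [|lra].
   apply Rmult_neg_pos; auto. apply Rinv_0_lt_compat; auto. }
 assert (Hm : forall m, (m1 <= m)%nat -> P (fun w => ~ E w) <= Cs * / INR m).
 { intros m Hm. assert (HmR : 1 <= INR m) by (apply (le_INR 1); lia).
   eapply Rle_trans. apply (P_mono F P _ (fun w => exists j, B (m + j)%nat w) hP (F_compl F P _ hP HFE) (F_Union F P _ hP (fun j => HB _))).
   { intros w Hw. apply NNPP; intros Hno. apply Hw. exists m. intros n Hn HBn. apply Hno. exists (n - m)%nat.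
     replace (m + (n - m))%nat with n by lia; auto. }
   apply (P_union_bound F P (fun j w => B (m + j)%nat w) (fun j => Cs * / (INR (m + j) * INR (m + j + 1))) _ hP).
   - intros j; apply HB.
   - intros j; apply HPB; lia.
   - intros J. rewrite fsum_scal, telescope by lia. apply Rmult_le_compat_l; auto.
     assert (0 < / INR (m + J)) by (apply Rinv_0_lt_compat, lt_0_INR; lia). lra. }
 split; auto. pose proof (P_compl F P E hP HFE).
 assert (Hq : P (fun w => ~ E w) <= 0).
 { destruct (Rle_or_lt (P (fun w => ~ E w)) 0) as [|Hq]; auto.
   destruct (nat_above m1 (Cs / P (fun w => ~ E w))) as [m [Hm1' Hma]].
   specialize (Hm m Hm1'). assert (HmR : 0 < INR m) by (apply lt_0_INR; lia).
   exfalso. apply (Rmult_lt_compat_r (P (fun w => ~ E w))) in Hma; auto.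
   replace (Cs / P (fun w => ~ E w) * P (fun w => ~ E w)) with Cs in Hma by (field; lra).
   apply (Rmult_le_compat_l (INR m)) in Hm; [|lra]. replace (INR m * (Cs * / INR m)) with Cs in Hm by (field; lra). lra. }
 pose proof (P_nonneg F P _ hP (F_compl F P _ hP HFE)). lra. Qed.


Lemma up_nat y : 0 <= y -> y <= INR (Z.to_nat (up y)) <= y + 1.
Proof. intros Hy. destruct (archimed y) as [H1 H2].
 assert (Hz : (0 <= up y)%Z) by (apply le_IZR; lra).
 rewrite INR_IZR_INZ, Z2Nat.id by auto. lra. Qed.

Theorem theorem6
  (b : R) (hb : 1 < b)
  (f : nat -> R) (hf : is_pmf_pos f)
  (alpha : R) (halpha : 0 < alpha)
  (htail : exists k0 k1 N : R, 0 < k0 /\ k0 <= k1 /\ 0 < N /\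
             forall x : nat, N <= INR x ->
               k0 * exp (- alpha * INR x) <= f x /\ f x <= k1 * exp (- alpha * INR x))
  (tau : R) (htau : 0 < tau < 1 / 2)
  (Omega : Type) (F : (Omega -> Prop) -> Prop) (P : (Omega -> Prop) -> R)
  (hP : is_prob_space F P)
  (X : nat -> Omega -> nat) (hX : iid_with_law F P X f) :
  exists E : Omega -> Prop, F E /\ P E = 1 /\
    forall w, E w ->
      exists (C : R) (n0 : nat), forall n : nat, (n0 <= n)%nat ->
        Rabs (entropy b f - entropy b (emp_cond_pmf X n w (Rpower (INR n) (- tau))))
          <= C * (Rpower (INR n) (- tau) * logb b (INR n)).
Proof.
 destruct hf as [hf00 [hf0 hfs]]. apply infinite_sum_cvs in hfs.
 assert (hf1 : forall x, 0 <= f x <= 1).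
 { intros x; split; auto. pose proof (cvs_fsum_le f 1 (S x) hf0 hfs). simpl in H.
   pose proof (fsum_nonneg x f (fun k _ => hf0 k)). lra. }
 destruct htail as [k0 [k1 [N [Hk0 [Hk01 [HN Hbd]]]]]].
 set (N0 := Z.to_nat (up N)).
 assert (Hfb : forall x, (N0 <= x)%nat -> k0 * exp (- alpha * INR x) <= f x <= k1 * exp (- alpha * INR x)).
 { intros x Hx. apply Hbd. apply le_INR in Hx. pose proof (up_nat N ltac:(lra)). fold N0 in H. lra. }
 assert (Hk1 : 0 < k1) by lra.
 destruct (small_sums f alpha k0 k1 N0 hf1 halpha Hk0 Hk1 Hfb) as [A1 [A2 [A3 [HA1 [HA2 [HA3 HS]]]]]].
 set (r := exp (- alpha)).
 assert (Hr : 0 < r < 1). { unfold r; split; [apply exp_pos|]. rewrite <- exp_0. apply exp_increasing; lra. }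
 set (c1 := Rabs (ln (2 * k1 / (1 - r)))).
 set (tau' := (tau + 1 / 2) / 2). set (d := tau' - tau). set (beta := 1 - 2 * tau').
 assert (Hd : 0 < d) by (unfold d, tau'; lra). assert (Hbeta : 0 < beta) by (unfold beta, tau'; lra).
 set (epsf := fun n : nat => Rpower (INR n) (- tau)).
 set (tf := fun n : nat => exp (- tau' * ln (INR n))).
 set (Mf := fun n : nat => (N0 + Z.to_nat (up ((tau * ln (INR n) + c1) / alpha)))%nat).
 set (pTf := fun n : nat => series_value (fun x => f x * indic (fun y => (Mf n <= y)%nat) x)).
 assert (HpT : forall n, cvs (fun x => f x * indic (fun y => (Mf n <= y)%nat) x) (pTf n)).
 { intros n. destruct (cvs_nonneg_bounded (fun x => f x * indic (fun y => (Mf n <= y)%nat) x) 1) as [l [Hl _]].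
   - intros; apply Rmult_le_pos; [apply hf0|apply indic_bounds].
   - intros K. eapply Rle_trans; [|apply (cvs_fsum_le f 1 K hf0 hfs)]. apply fsum_le. intros.
     pose proof (indic_bounds (fun y => (Mf n <= y)%nat) k). pose proof (hf0 k). nra.
   - unfold pTf. rewrite (series_value_cvs _ l Hl). auto. }
 assert (Hc1 : 0 <= c1) by apply Rabs_pos.
 assert (Heps_e : forall n, epsf n = exp (- tau * ln (INR n))) by (intros; unfold epsf, Rpower; f_equal).
 assert (HMlo : forall n, 0 <= ln (INR n) -> tau * ln (INR n) + c1 <= alpha * INR (Mf n)).
 { intros n Hn. unfold Mf. rewrite plus_INR. pose proof (pos_INR N0).
   assert (0 <= (tau * ln (INR n) + c1) / alpha) by (unfold Rdiv; apply Rmult_le_pos; [nra|left; apply Rinv_0_lt_compat; lra]).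
   pose proof (up_nat _ H0). destruct H1 as [H1 _].
   apply (Rmult_le_compat_l alpha) in H1; [|lra]. replace (alpha * ((tau * ln (INR n) + c1) / alpha)) with (tau * ln (INR n) + c1) in H1 by (field; lra). nra. }
 assert (HMhi : forall n, 0 <= ln (INR n) -> INR (Mf n) <= INR N0 + (tau * ln (INR n) + c1) / alpha + 1).
 { intros n Hn. unfold Mf. rewrite plus_INR.
   assert (0 <= (tau * ln (INR n) + c1) / alpha) by (unfold Rdiv; apply Rmult_le_pos; [nra|left; apply Rinv_0_lt_compat; lra]).
   pose proof (up_nat _ H). lra. }
 assert (HpTle : forall n, 0 <= ln (INR n) -> pTf n <= epsf n / 2).
 { intros n Hn. apply (cvs_le_bound _ _ _ (HpT n)). intros K.
   assert (HMN : (N0 <= Mf n)%nat) by (unfold Mf; lia).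
   pose proof (tail_bound f alpha k1 N0 (Mf n) 0 1 hf0 halpha Hk1 (fun x Hx => proj2 (Hfb x Hx)) HMN ltac:(lra) ltac:(lra) K) as HT.
   fold r in HT. rewrite (fsum_ext K _ (fun x => if le_dec (Mf n) x then f x * (0 * INR x + 1) else 0)).
   2:{ intros x _. destruct le_dec; [rewrite indic_true by auto|rewrite indic_false by auto]; ring. }
   eapply Rle_trans; [exact HT|].
   replace ((0 * INR (Mf n) + 1) * / (1 - r) + 0 * (r / (1 - r) ^ 2)) with (/ (1 - r)) by ring.
   replace (r ^ Mf n) with (exp (- alpha * INR (Mf n))) by (unfold r; rewrite exp_r; auto).
   assert (H1 : exp (- alpha * INR (Mf n)) <= epsf n * exp (- c1)).
   { rewrite Heps_e, <- exp_plus. apply exp_le_mono. pose proof (HMlo n Hn). lra. }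
   assert (Hq : 0 < 2 * k1 / (1 - r)) by (apply Rdiv_lt_0_compat; lra).
   assert (H2 : exp (- c1) <= / (2 * k1 / (1 - r))).
   { rewrite <- (exp_ln (2 * k1 / (1 - r))) by auto. rewrite <- exp_Ropp. apply exp_le_mono.
     unfold c1. pose proof (RRle_abs (ln (2 * k1 / (1 - r)))). lra. }
   assert (He0 : 0 < epsf n) by (rewrite Heps_e; apply exp_pos).
   assert (H3 : exp (- alpha * INR (Mf n)) <= epsf n * / (2 * k1 / (1 - r))).
   { eapply Rle_trans; [exact H1|]. apply Rmult_le_compat_l; lra. }
   replace (epsf n / 2) with (k1 * (epsf n * / (2 * k1 / (1 - r))) * / (1 - r)) by (field; lra).
   apply Rmult_le_compat_r; [left; apply Rinv_0_lt_compat; lra|]. apply Rmult_le_compat_l; lra. }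
 set (a0 := INR N0 + c1 / alpha + 2). set (a1 := tau / alpha).
 destruct (ln_growth d a0 a1 Hd) as [U2 [HU2 HU2']].
 { unfold a0. pose proof (pos_INR N0). assert (0 <= c1 / alpha) by (unfold Rdiv; apply Rmult_le_pos; [lra|left; apply Rinv_0_lt_compat; lra]). lra. }
 { unfold a1. unfold Rdiv; apply Rmult_le_pos; [lra|left; apply Rinv_0_lt_compat; lra]. }
 set (U1 := (2 + ln 2 + ln (2 * (6 + A3))) / tau).
 destruct (nat_above 1 (4 / beta)) as [k [Hk1' Hkb]].
 assert (Hkb' : 4 <= INR k * beta).
 { apply (Rmult_lt_compat_r beta) in Hkb; auto. replace (4 / beta * beta) with 4 in Hkb by (field; lra). lra. }
 destruct (nat_large (Rmax U1 U2)) as [n2 [Hn2 Hn2']].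
 assert (Hu : forall n, (n2 <= n)%nat -> U1 <= ln (INR n) /\ U2 <= ln (INR n) /\ 0 <= ln (INR n) /\ (1 <= n)%nat /\ INR n = exp (ln (INR n))).
 { intros n Hn. pose proof (Hn2' n Hn). pose proof (Rmax_l U1 U2). pose proof (Rmax_r U1 U2).
   split; [lra|split; [lra|split; [lra|split; [lia|]]]]. rewrite exp_ln; auto. apply lt_0_INR; lia. }
 assert (HM1 : forall n, (n2 <= n)%nat -> INR (Mf n) + 1 <= exp (d * ln (INR n))).
 { intros n Hn. destruct (Hu n Hn) as [_ [HU [H0 _]]]. pose proof (HMhi n H0). eapply Rle_trans; [|apply HU2'; auto].
   unfold a0, a1. replace ((tau * ln (INR n) + c1) / alpha) with (c1 / alpha + tau / alpha * ln (INR n)) in H by (field; lra). lra. }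
 assert (Htf : forall n, (n2 <= n)%nat -> 0 < tf n <= 1).
 { intros n Hn. destruct (Hu n Hn) as [_ [_ [H0 _]]]. unfold tf. split; [apply exp_pos|]. rewrite <- exp_0. apply exp_le_mono.
   assert (0 < tau') by (unfold tau'; lra). nra. }
 set (Cs := 4 * (8 * INR k) ^ k).
 assert (HPB : forall n, (n2 <= n)%nat -> P (bad X f n (Mf n) (tf n) (pTf n)) <= Cs * / (INR n * INR (n + 1))).
 { intros n Hn. destruct (Hu n Hn) as [_ [_ [H0 [Hn1 Hexp]]]].
   destruct (bad_prob F P X f n (Mf n) (tf n) (pTf n) hP hX hf0 hfs (HpT n) (Htf n Hn) Hn1) as [_ HP].
   set (u := ln (INR n)) in *. set (NN := INR n) in *.
   assert (HNN : 1 <= NN) by (apply (le_INR 1); auto).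
   assert (Hy : NN * tf n ^ 2 = exp (beta * u)).
   { rewrite Hexp. unfold tf. fold u. simpl pow. rewrite Rmult_1_r, <- !exp_plus. f_equal. unfold beta, u, NN; ring. }
   rewrite Hy in HP. set (y := exp (beta * u)) in *.
   assert (Hy0 : 0 < y) by apply exp_pos.
   pose proof (exp_decay y k Hy0 Hk1') as Hdec.
   assert (HQ : 0 < (8 * INR k) ^ k) by (apply pow_lt; pose proof (le_INR 1 k Hk1'); simpl in H; lra).
   assert (HyN : NN ^ 4 <= y ^ k).
   { unfold y. rewrite <- exp_mult_nat. rewrite Hexp, <- exp_mult_nat. apply exp_le_mono. simpl (INR 4).
     replace (INR k * (beta * u)) with ((INR k * beta) * u) by ring. nra. }
   assert (HN4 : 0 < NN ^ 4) by (apply pow_lt; lra).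
   assert (Heq : (8 * INR k / y) ^ k = (8 * INR k) ^ k * / y ^ k). { unfold Rdiv. rewrite Rpow_mult_distr. rewrite pow_inv. reflexivity. } rewrite Heq in Hdec.
   assert (Hinv : / y ^ k <= / NN ^ 4) by (apply Rinv_le_contravar; auto).
   assert (HMn : INR (Mf n) + 1 <= NN).
   { eapply Rle_trans; [apply HM1; auto|]. rewrite Hexp. apply exp_le_mono. assert (0 <= d <= 1) by (unfold d, tau'; lra). unfold u, NN in *. nra. }
   assert (HPB1 : P (bad X f n (Mf n) (tf n) (pTf n)) <= 2 * NN * (8 * INR k) ^ k * / NN ^ 4).
   { eapply Rle_trans; [exact HP|]. pose proof (pos_INR (Mf n)).
     assert (exp (- y / 8) <= (8 * INR k) ^ k * / NN ^ 4).
     { eapply Rle_trans; [exact Hdec|]. apply Rmult_le_compat_l; lra. }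
     assert (0 <= exp (- y / 8)) by (left; apply exp_pos).
     replace (2 * NN * (8 * INR k) ^ k * / NN ^ 4) with (2 * NN * ((8 * INR k) ^ k * / NN ^ 4)) by ring.
     apply Rmult_le_compat; try lra. }
   eapply Rle_trans; [exact HPB1|]. unfold Cs. rewrite plus_INR. fold NN. simpl (INR 1).
   replace (2 * NN * (8 * INR k) ^ k * / NN ^ 4) with ((8 * INR k) ^ k * (2 / NN ^ 3)) by (field; lra).
   replace (4 * (8 * INR k) ^ k * / (NN * (NN + 1))) with ((8 * INR k) ^ k * (4 / (NN * (NN + 1)))) by (field; lra).
   apply Rmult_le_compat_l; [lra|]. apply (Rmult_le_reg_r (NN ^ 3 * (NN * (NN + 1)))).
   { apply Rmult_lt_0_compat; [apply pow_lt; lra|nra]. }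
   replace (2 / NN ^ 3 * (NN ^ 3 * (NN * (NN + 1)))) with (2 * (NN * (NN + 1))) by (field; lra).
   replace (4 / (NN * (NN + 1)) * (NN ^ 3 * (NN * (NN + 1)))) with (4 * NN ^ 3) by (field; nra).
   simpl pow. nra. }
 set (Bn := fun n => if le_dec n2 n then bad X f n (Mf n) (tf n) (pTf n) else (fun _ : Omega => False)).
 destruct (borel_cantelli F P Bn Cs n2 hP) as [HFE HPE]; auto.
 { intros n. unfold Bn. destruct le_dec as [Hn|Hn]; [|apply (F_false F P hP)].
   destruct (Hu n Hn) as [_ [_ [_ [Hn1 _]]]]. apply (bad_prob F P X f n (Mf n) (tf n) (pTf n) hP hX hf0 hfs (HpT n) (Htf n Hn) Hn1). }
 { intros n Hn. unfold Bn. destruct le_dec; [|lia]. apply HPB; auto. }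
 eexists. split; [exact HFE|split; [exact HPE|]].
 intros w [n0 Hw].
 exists (tau * (6 * (2 + ln 2) + 3 * (6 + A3) + A1 + A2)), (max n0 n2).
 intros n Hn. specialize (Hw n ltac:(lia)). unfold Bn in Hw. destruct le_dec as [Hn2n|]; [|lia].
 destruct (Hu n Hn2n) as [HU1 [_ [H0 [Hn1 Hexp]]]].
 set (u := ln (INR n)) in *.
 assert (Hgood1 : forall x, (x < Mf n)%nat -> Rabs (ept X n w x - f x) <= tf n).
 { intros x Hx. apply Rnot_lt_le. intros Hc. apply Hw. left. exists x; auto. }
 assert (Hgood2 : Rabs (emp X n w (fun y => (Mf n <= y)%nat) - pTf n) <= tf n).
 { apply Rnot_lt_le. intros Hc. apply Hw. right; auto. }
 assert (Heu : Rpower (INR n) (- tau) = exp (- (tau * u))) by (unfold Rpower, u; f_equal; ring).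
 assert (Htu : 2 + ln 2 + ln (2 * (6 + A3)) <= tau * u).
 { unfold U1 in HU1. apply (Rmult_le_compat_l tau) in HU1; [|lra].
   replace (tau * ((2 + ln 2 + ln (2 * (6 + A3))) / tau)) with (2 + ln 2 + ln (2 * (6 + A3))) in HU1 by (field; lra). lra. }
 assert (Hl26 : 0 <= ln (2 * (6 + A3))). { rewrite <- ln_1. apply ln_le_mono; lra. }
 pose proof ln2_pos as Hl2.
 assert (Hlb : 0 < ln b) by (rewrite <- ln_1; apply ln_increasing; lra).
 set (eps := Rpower (INR n) (- tau)) in *.
 assert (Heps : 0 < eps) by (rewrite Heu; apply exp_pos).
 assert (HL : - ln eps = tau * u) by (rewrite Heu, ln_exp; ring).
 assert (He2 : 2 * eps <= / exp 1).
 { rewrite Heu, <- exp_Ropp. rewrite <- (exp_ln 2) at 1 by lra. rewrite <- exp_plus. apply exp_le_mono. lra. }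
 assert (HA3e : (6 + A3) * eps <= 1 / 2).
 { rewrite Heu. rewrite <- (exp_ln (6 + A3)) by lra. rewrite <- exp_plus.
   replace (1 / 2) with (exp (- ln 2)) by (rewrite exp_Ropp, exp_ln by lra; field).
   apply exp_le_mono. rewrite ln_mult in Htu by lra. lra. }
 destruct (HS eps Heps He2) as [HS1 HSp].
 assert (HMt : INR (Mf n) * tf n + tf n <= eps).
 { pose proof (HM1 n Hn2n) as HM. fold u in HM. pose proof (Htf n Hn2n).
   replace (INR (Mf n) * tf n + tf n) with ((INR (Mf n) + 1) * tf n) by ring.
   eapply Rle_trans. apply Rmult_le_compat_r; [lra|exact HM]. unfold tf. fold u. rewrite <- exp_plus, Heu.
   apply exp_le_mono. unfold d. lra. }
 pose proof (per_n X n w f b eps (tf n) (Mf n) (pTf n) A1 A2 A3 hb Hn1 hf1 hfs Heps He2 HS1 HSp (HpT n)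
    (HpTle n H0) ltac:(pose proof (Htf n Hn2n); lra) HMt HA3e Hgood1 Hgood2) as Hmain.
 eapply Rle_trans; [exact Hmain|]. rewrite HL. unfold logb. fold u.
 assert (HLam : 1 <= tau * u) by lra.
 set (Lam := tau * u) in *.
 assert (Hin : 6 * (1 + ln 2 + Lam) + (Lam + 2) * (6 + A3) + A1 * Lam + A2 <= Lam * (6 * (2 + ln 2) + 3 * (6 + A3) + A1 + A2)) by nra.
 replace (tau * (6 * (2 + ln 2) + 3 * (6 + A3) + A1 + A2) * (eps * (u / ln b))) with (eps * (Lam * (6 * (2 + ln 2) + 3 * (6 + A3) + A1 + A2)) / ln b)
   by (unfold Lam; field; lra).
 unfold Rdiv. apply Rmult_le_compat_r; [left; apply Rinv_0_lt_compat; lra|]. apply Rmult_le_compat_l; lra.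
Qed.
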